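(* Let $U\subset\mathbb R^n$ be open, $X$ a $C^1$ vector field on $U$, and $V:U\to\mathbb R$ a $C^2$ function satisfying A1, A2, and either A3 or A3$'$ (for A3$'$ assume $X,V$ are $C^\infty$). Then $V^{-1}(0)$ is uniformly asymptotically stable for the system $\dot x = X(x)-\nabla V(x)$.
   Context: (A1) $V\ge0$ on $U$, $V^{-1}(0)\ne\emptyset$, $\nabla V\cdot X=0$ on $U$. (A2) $c>0$ is such that $V^{-1}([0,c])$ is a compact subset of $U$. (A3) The set of critical points of $V$ in $V^{-1}([0,c])$ equals $V^{-1}(0)$. (A3$'$) With $X^0g=g$, $X^kg=X\cdot\nabla(X^{k-1}g)$ and $S=\{x\in U: X^k\partial V/\partial x^i(x)=0\ \forall k\ge0,\,1\le i\le n\}$, one has $S\cap V^{-1}([0,c])\subset V^{-1}(0)$. For nonempty compact $\Lambda\subset\mathbb R^n$, $\operatorname{dist}(x,\Lambda)=\inf_{a\in\Lambda}|x-a|$ and $S(\Lambda,r)=\{x:\operatorname{dist}(x,\Lambda)<r\}$. Let $x(t;x_0)$ be the solution with $x(0)=x_0$. $\Lambda$ is uniformly stable if for each $\epsilon>0$ there is $\delta>0$ with $x_0\in S(\Lambda,\delta),\ t\ge0\Rightarrow x(t;x_0)\in S(\Lambda,\epsilon)$. $\Lambda$ is uniformly asymptotically stable if it is positively invariant and uniformly stable and there is $\delta_0>0$ and for each $\epsilon>0$ a $T(\epsilon)>0$ with $x_0\in S(\Lambda,\delta_0),\ t\ge T(\epsilon)\Rightarrow x(t;x_0)\in S(\Lambda,\epsilon)$.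 *)

(* Defs.v *)
From Stdlib Require Import Reals Lra ClassicalEpsilon.
From Stdlib Require Fin.
Open Scope R_scope.

Definition vec (n : nat) := Fin.t n -> R.

Fixpoint fsum (n : nat) : (Fin.t n -> R) -> R :=
  match n return (Fin.t n -> R) -> R with
  | O => fun _ => 0
  | S m => fun f => f Fin.F1 + fsum m (fun i => f (Fin.FS i))
  end.

Definition vsub {n} (x y : vec n) : vec n := fun i => x i - y i.
Definition dot {n} (x y : vec n) : R := fsum n (fun i => x i * y i).
Definition norm {n} (x : vec n) : R := sqrt (fsum n (fun i => x i ^ 2)).

Definition upd {n} (x : vec n) (i : Fin.t n) (h : R) : vec n :=
  fun j => if Fin.eq_dec j i then x j + h else x j.

Definition has_partial {n} (f : vec n -> R) (i : Fin.t n) (x : vec n) (l : R) : Prop :=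
  derivable_pt_lim (fun h => f (upd x i h)) 0 l.

(* the i-th partial derivative (a chosen value; unique whenever it exists) *)
Definition pderiv {n} (f : vec n -> R) (i : Fin.t n) (x : vec n) : R :=
  epsilon (inhabits 0) (fun l => has_partial f i x l).

Definition grad {n} (f : vec n -> R) (x : vec n) : vec n := fun i => pderiv f i x.

Definition is_open {n} (U : vec n -> Prop) : Prop :=
  forall x, U x -> exists r, r > 0 /\ forall y, norm (vsub y x) < r -> U y.

Definition is_compact {n} (K : vec n -> Prop) : Prop :=
  forall (I : Type) (O : I -> vec n -> Prop),
    (forall i, is_open (O i)) ->
    (forall x, K x -> exists i, O i x) ->
    exists l : list I, forall x, K x -> exists i, List.In i l /\ O i x.

Definition continuous_on {n} (U : vec n -> Prop) (g : vec n -> R) : Prop :=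
  forall x, U x -> forall eps, eps > 0 -> exists del, del > 0 /\
    forall y, U y -> norm (vsub y x) < del -> Rabs (g y - g x) < eps.

Fixpoint Ck {n} (k : nat) (U : vec n -> Prop) (f : vec n -> R) : Prop :=
  match k with
  | O => continuous_on U f
  | S k' => continuous_on U f /\
      exists D : Fin.t n -> vec n -> R,
        (forall i x, U x -> has_partial f i x (D i x)) /\
        (forall i, Ck k' U (D i))
  end.

Definition Cinf {n} (U : vec n -> Prop) (f : vec n -> R) : Prop := forall k, Ck k U f.

Definition Ck_field {n} (k : nat) (U : vec n -> Prop) (X : vec n -> vec n) : Prop :=
  forall i, Ck k U (fun x => X x i).
Definition Cinf_field {n} (U : vec n -> Prop) (X : vec n -> vec n) : Prop :=
  forall i, Cinf U (fun x => X x i).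

Fixpoint lie {n} (X : vec n -> vec n) (k : nat) (g : vec n -> R) : vec n -> R :=
  match k with
  | O => g
  | S k' => fun x => dot (X x) (grad (lie X k' g) x)
  end.

(* S(Lambda, r) = { x : dist(x, Lambda) < r }; for nonempty Lambda,
   inf_{a in Lambda} |x - a| < r  iff  some a in Lambda has |x - a| < r *)
Definition nbhd {n} (L : vec n -> Prop) (r : R) (x : vec n) : Prop :=
  exists a, L a /\ norm (vsub x a) < r.

Definition is_solution {n} (U : vec n -> Prop) (F : vec n -> vec n)
    (x0 : vec n) (x : R -> vec n) : Prop :=
  x 0 = x0 /\
  forall t, 0 <= t -> U (x t) /\
    forall i, derivable_pt_lim (fun s => x s i) t (F (x t) i).

Definition all_sol {n} (U : vec n -> Prop) (F : vec n -> vec n) (x0 : vec n)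
    (P : (R -> vec n) -> Prop) : Prop :=
  (exists x, is_solution U F x0 x) /\ forall x, is_solution U F x0 x -> P x.

Definition positively_invariant {n} U F (L : vec n -> Prop) : Prop :=
  forall x0, L x0 -> all_sol U F x0 (fun x => forall t, 0 <= t -> L (x t)).

Definition uniformly_stable {n} U F (L : vec n -> Prop) : Prop :=
  forall eps, eps > 0 -> exists del, del > 0 /\
    forall x0, nbhd L del x0 ->
      all_sol U F x0 (fun x => forall t, 0 <= t -> nbhd L eps (x t)).

Definition uniformly_asymptotically_stable {n} U F (L : vec n -> Prop) : Prop :=
  positively_invariant U F L /\ uniformly_stable U F L /\
  exists del0, del0 > 0 /\
    forall eps, eps > 0 -> exists T, T > 0 /\
      forall x0, nbhd L del0 x0 ->
        all_sol U F x0 (fun x => forall t, T <= t -> nbhd L eps (x t)).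

(* Main.v *)
Require Import Defs.
From Stdlib Require Import Reals Lra Psatz ClassicalEpsilon FunctionalExtensionality Classical List Arith ZArith.
From Stdlib Require Fin.
From Stdlib Require Import Ranalysis5 PSeries_reg.
From Coquelicot Require Import Coquelicot.
Import Defs.
Open Scope R_scope.

Definition sumsq {n} (x : vec n) : R := fsum n (fun i => x i ^ 2).

Lemma fsum_ext n (f g : Fin.t n -> R) : (forall i, f i = g i) -> fsum n f = fsum n g.
Proof.
  revert f g; induction n; intros f g H; simpl; auto.
  rewrite H, (IHn (fun i => f (Fin.FS i)) (fun i => g (Fin.FS i))); auto.
Qed.

Lemma fsum_plus n (f g : Fin.t n -> R) : fsum n (fun i => f i + g i) = fsum n f + fsum n g.
Proof.
  revert f g; induction n; intros f g; simpl; [lra|].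
  rewrite (IHn (fun i => f (Fin.FS i)) (fun i => g (Fin.FS i))); lra.
Qed.

Lemma fsum_scal n c (f : Fin.t n -> R) : fsum n (fun i => c * f i) = c * fsum n f.
Proof.
  revert f; induction n; intros f; simpl; [lra|].
  rewrite (IHn (fun i => f (Fin.FS i))); lra.
Qed.

Lemma fsum_opp n (f : Fin.t n -> R) : fsum n (fun i => - f i) = - fsum n f.
Proof.
  revert f; induction n; intros f; simpl; [lra|].
  rewrite (IHn (fun i => f (Fin.FS i))); lra.
Qed.

Lemma fsum_minus n (f g : Fin.t n -> R) : fsum n (fun i => f i - g i) = fsum n f - fsum n g.
Proof.
  unfold Rminus. rewrite fsum_plus, fsum_opp. lra.
Qed.

Lemma fsum_le n (f g : Fin.t n -> R) : (forall i, f i <= g i) -> fsum n f <= fsum n g.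
Proof.
  revert f g; induction n; intros f g H; simpl; [lra|].
  specialize (IHn (fun i => f (Fin.FS i)) (fun i => g (Fin.FS i))).
  assert (fsum n (fun i => f (Fin.FS i)) <= fsum n (fun i => g (Fin.FS i))).
  { apply IHn; intros; apply H. }
  specialize (H Fin.F1). lra.
Qed.

Lemma fsum_nonneg n (f : Fin.t n -> R) : (forall i, 0 <= f i) -> 0 <= fsum n f.
Proof.
  intros H. replace 0 with (fsum n (fun _ => 0)).
  apply fsum_le; auto.
  clear H f. induction n; simpl; auto. rewrite IHn; lra.
Qed.

Lemma fsum_zero n : fsum n (fun _ => 0) = 0.
Proof. induction n; simpl; auto. rewrite IHn; lra. Qed.

Lemma fsum_ge_term n (f : Fin.t n -> R) i : (forall j, 0 <= f j) -> f i <= fsum n f.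
Proof.
  revert f i; induction n; intros f i H. inversion i.
  simpl. revert f H. pattern i. apply Fin.caseS'.
  - intros f H. assert (0 <= fsum n (fun i => f (Fin.FS i))) by (apply fsum_nonneg; auto). lra.
  - intros p f H. assert (f (Fin.FS p) <= fsum n (fun i => f (Fin.FS i))).
    apply (IHn (fun i => f (Fin.FS i))); auto. specialize (H Fin.F1); lra.
Qed.

Lemma fsum_le_const n (f : Fin.t n -> R) M : (forall i, f i <= M) -> fsum n f <= INR n * M.
Proof.
  revert f; induction n; intros f H; cbn [fsum]. simpl; lra.
  assert (fsum n (fun i => f (Fin.FS i)) <= INR n * M) by (apply IHn; auto).
  specialize (H Fin.F1). rewrite S_INR. lra.
Qed.

Lemma fsum_abs n (f : Fin.t n -> R) : Rabs (fsum n f) <= fsum n (fun i => Rabs (f i)).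
Proof.
  revert f; induction n; intros f; simpl. rewrite Rabs_R0; lra.
  eapply Rle_trans. apply Rabs_triang. specialize (IHn (fun i => f (Fin.FS i))). lra.
Qed.

Lemma sqrt_le_l x r : 0 <= x -> 0 <= r -> x <= r ^ 2 -> sqrt x <= r.
Proof. intros H1 H2 H3. rewrite <- (sqrt_pow2 r H2). apply sqrt_le_1_alt; auto. Qed.

Lemma sumsq_nonneg {n} (x : vec n) : 0 <= sumsq x.
Proof. apply fsum_nonneg. intros; apply pow2_ge_0. Qed.

Lemma norm_nonneg {n} (x : vec n) : 0 <= norm x.
Proof. apply sqrt_pos. Qed.

Lemma norm_sq {n} (x : vec n) : norm x ^ 2 = sumsq x.
Proof. unfold norm. rewrite pow2_sqrt; auto. apply sumsq_nonneg. Qed.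

Lemma norm_comp {n} (x : vec n) i : Rabs (x i) <= norm x.
Proof.
  unfold norm. rewrite <- sqrt_Rsqr_abs. apply sqrt_le_1_alt.
  unfold Rsqr. replace (x i * x i) with (x i ^ 2) by ring.
  apply (fsum_ge_term n (fun i => x i ^ 2)). intros; apply pow2_ge_0.
Qed.

Lemma norm_le_sumabs {n} (x : vec n) : norm x <= fsum n (fun i => Rabs (x i)).
Proof.
  unfold norm. apply sqrt_le_l.
  - apply sumsq_nonneg.
  - apply fsum_nonneg; intros; apply Rabs_pos.
  - change (fsum n (fun i => x i ^ 2)) with (sumsq x). revert x. induction n; intros x.
    + unfold sumsq; simpl; lra.
    + unfold sumsq; simpl. specialize (IHn (fun i => x (Fin.FS i))). unfold sumsq in IHn.
      assert (0 <= fsum n (fun i => Rabs (x (Fin.FS i)))) by (apply fsum_nonneg; intros; apply Rabs_pos).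
      pose proof (Rabs_pos (x Fin.F1)).
      change (fsum (S n) (fun i => x i ^ 2) <= fsum (S n) (fun i => Rabs (x i)) ^ 2).
      cbn [fsum]. rewrite <- (pow2_abs (x Fin.F1)). nra.
Qed.

Lemma norm_le_sq {n} (x : vec n) r : 0 <= r -> sumsq x <= r ^ 2 -> norm x <= r.
Proof. intros H1 H2. unfold norm. apply sqrt_le_l; auto. apply sumsq_nonneg. Qed.

Lemma norm_lt_sq {n} (x : vec n) r : 0 <= r -> sumsq x < r ^ 2 -> norm x < r.
Proof.
  intros H1 H2. unfold norm. rewrite <- (sqrt_pow2 r H1). apply sqrt_lt_1_alt.
  split; auto. apply sumsq_nonneg.
Qed.

Lemma CS_aux (a b S A B : R) : 0 <= A -> 0 <= B -> S ^ 2 <= A * B ->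
  (a * b + S) ^ 2 <= (a ^ 2 + A) * (b ^ 2 + B).
Proof.
  intros HA HB HS.
  assert (H1 : 2 * a * b * S <= a ^ 2 * B + b ^ 2 * A).
  { assert (0 <= a ^ 2 * B + b ^ 2 * A) by nra.
    assert ((2 * a * b * S) ^ 2 <= (a ^ 2 * B + b ^ 2 * A) ^ 2).
    { assert ((2*a*b*S)^2 = 4 * (a^2*b^2) * S^2) by ring.
      assert ((a ^ 2 * B + b ^ 2 * A) ^ 2 = (a^2*B - b^2*A)^2 + 4 * (a^2*b^2) * (A*B)) by ring.
      assert (0 <= a^2*b^2) by nra.
      assert (4*(a^2*b^2)*S^2 <= 4*(a^2*b^2)*(A*B)) by (apply Rmult_le_compat_l; nra).
      pose proof (pow2_ge_0 (a^2*B - b^2*A)). nra. }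
    destruct (Rle_dec (2*a*b*S) 0). lra.
    apply Rsqr_incr_0_var; unfold Rsqr; try lra; nra. }
  nra.
Qed.

Lemma dot_CS {n} (x y : vec n) : (dot x y) ^ 2 <= sumsq x * sumsq y.
Proof.
  unfold dot, sumsq. revert x y; induction n; intros x y; simpl. lra.
  apply CS_aux. apply (sumsq_nonneg (fun i => x (Fin.FS i))). apply (sumsq_nonneg (fun i => y (Fin.FS i))).
  apply IHn.
Qed.

Lemma dot_le {n} (x y : vec n) : dot x y <= norm x * norm y.
Proof.
  pose proof (dot_CS x y). rewrite <- !norm_sq in H.
  pose proof (norm_nonneg x); pose proof (norm_nonneg y).
  destruct (Rle_dec (dot x y) 0). nra.
  apply Rsqr_incr_0_var; unfold Rsqr; nra.
Qed.

Definition vadd {n} (x y : vec n) : vec n := fun i => x i + y i.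

Lemma sumsq_add {n} (x y : vec n) : sumsq (vadd x y) = sumsq x + 2 * dot x y + sumsq y.
Proof.
  unfold sumsq, dot, vadd. rewrite <- fsum_scal, <- !fsum_plus. apply fsum_ext; intros; ring.
Qed.

Lemma norm_add {n} (x y : vec n) : norm (vadd x y) <= norm x + norm y.
Proof.
  pose proof (norm_nonneg x); pose proof (norm_nonneg y).
  apply norm_le_sq. lra. rewrite sumsq_add, <- !norm_sq. pose proof (dot_le x y). nra.
Qed.

Lemma norm_triang {n} (x y z : vec n) : norm (vsub x z) <= norm (vsub x y) + norm (vsub y z).
Proof.
  replace (vsub x z) with (vadd (vsub x y) (vsub y z)). apply norm_add.
  apply functional_extensionality; intros; unfold vadd, vsub; ring.
Qed.

Lemma norm_sym {n} (x y : vec n) : norm (vsub x y) = norm (vsub y x).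
Proof.
  unfold norm. f_equal. apply fsum_ext. intros. unfold vsub. ring.
Qed.

Lemma norm_sub_refl {n} (x : vec n) : norm (vsub x x) = 0.
Proof.
  unfold norm. replace (fsum n (fun i => vsub x x i ^ 2)) with 0. apply sqrt_0.
  rewrite <- (fsum_zero n). apply fsum_ext; intros; unfold vsub; ring.
Qed.

Lemma sumsq_le {n} (x y : vec n) : (forall i, Rabs (x i) <= Rabs (y i)) -> sumsq x <= sumsq y.
Proof.
  intros H. apply fsum_le. intros i. rewrite <- (pow2_abs (x i)), <- (pow2_abs (y i)).
  specialize (H i). pose proof (Rabs_pos (x i)). nra.
Qed.

Lemma norm_le_comp {n} (x y : vec n) : (forall i, Rabs (x i) <= Rabs (y i)) -> norm x <= norm y.
Proof. intros H. unfold norm. apply sqrt_le_1_alt. apply sumsq_le; auto. Qed.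

Lemma norm_bound_comp {n} (x : vec n) M : 0 <= M -> (forall i, Rabs (x i) <= M) -> norm x <= INR n * M.
Proof.
  intros HM H. eapply Rle_trans. apply norm_le_sumabs. apply fsum_le_const; auto.
Qed.

Definition minl {I : Type} (f : I -> R) (l : list I) : R :=
  fold_right (fun i acc => Rmin (f i) acc) 1 l.

Lemma minl_pos {I} (f : I -> R) l : (forall i, f i > 0) -> minl f l > 0.
Proof.
  intros H; induction l; simpl. lra. apply Rmin_glb_lt; auto. apply H.
Qed.

Lemma minl_le {I} (f : I -> R) l i : In i l -> minl f l <= f i.
Proof.
  induction l; simpl. tauto. intros [->|H]. apply Rmin_l.
  eapply Rle_trans. apply Rmin_r. auto.
Qed.

Lemma ball_open {n} (c : vec n) r : is_open (fun y => norm (vsub y c) < r).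
Proof.
  intros x Hx. exists (r - norm (vsub x c)). split. lra.
  intros y Hy. pose proof (norm_triang y x c). lra.
Qed.

Lemma norm_zero_eq {n} (x y : vec n) : norm (vsub x y) = 0 -> x = y.
Proof.
  intros H. apply functional_extensionality. intros i.
  pose proof (norm_comp (vsub x y) i). rewrite H in H0. unfold vsub in H0.
  pose proof (Rabs_pos (x i - y i)). assert (Rabs (x i - y i) = 0) by lra.
  destruct (Rcase_abs (x i - y i)); [rewrite Rabs_left in H2|rewrite Rabs_right in H2]; lra.
Qed.

Lemma LN {n} (C : vec n -> Prop) (P : R -> vec n -> Prop) :
  is_compact C ->
  (forall m m' y, 0 < m' <= m -> P m y -> P m' y) ->
  (forall x, C x -> exists r m, r > 0 /\ m > 0 /\ forall y, norm (vsub y x) < r -> P m y) ->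
  exists d m, d > 0 /\ m > 0 /\ forall x y, C x -> norm (vsub y x) < d -> P m y.
Proof.
  intros HC Hmon Hloc.
  set (I := {x | C x}).
  assert (Hch : forall i : I, {p : R * R | fst p > 0 /\ snd p > 0 /\
       forall y, norm (vsub y (proj1_sig i)) < fst p -> P (snd p) y}).
  { intros [x Hx]. apply constructive_indefinite_description.
    destruct (Hloc x Hx) as (r & m & Hr & Hm & H). exists (r, m); simpl; auto. }
  set (rr := fun i => fst (proj1_sig (Hch i))).
  set (mm := fun i => snd (proj1_sig (Hch i))).
  destruct (HC I (fun i y => norm (vsub y (proj1_sig i)) < rr i / 2)) as [l Hl].
  - intros i; apply ball_open.
  - intros x Hx. exists (exist _ x Hx). simpl. rewrite norm_sub_refl.
    unfold rr. destruct (proj2_sig (Hch (exist _ x Hx))) as [Hr _]. apply Rdiv_lt_0_compat; [exact Hr|lra].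
  - exists (minl (fun i => rr i / 2) l), (minl mm l). split; [|split].
    + apply minl_pos. intros i. unfold rr. destruct (proj2_sig (Hch i)). lra.
    + apply minl_pos. intros i. unfold mm. destruct (proj2_sig (Hch i)). tauto.
    + intros x y Hx Hy. destruct (Hl x Hx) as [i [Hi Hxi]].
      pose proof (minl_le (fun i => rr i / 2) l i Hi). simpl in H.
      pose proof (minl_le mm l i Hi).
      destruct (proj2_sig (Hch i)) as (H1 & H2 & H3).
      apply Hmon with (mm i). split; auto. apply minl_pos. intros j. unfold mm.
      destruct (proj2_sig (Hch j)); tauto.
      apply H3. pose proof (norm_triang y x (proj1_sig i)). fold (rr i) in H4.
      unfold rr in *. lra.
Qed.

Lemma compact_sep {n} (C : vec n -> Prop) z : is_compact C -> ~ C z ->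
  exists r, r > 0 /\ forall w, C w -> r <= norm (vsub w z).
Proof.
  intros HC Hz.
  destruct (LN C (fun m y => m <= norm (vsub y z)) HC) as (d & m & Hd & Hm & H).
  - intros; lra.
  - intros x Hx. assert (norm (vsub x z) <> 0). { intro E. apply norm_zero_eq in E. subst; auto. }
    pose proof (norm_nonneg (vsub x z)).
    exists (norm (vsub x z) / 2), (norm (vsub x z) / 2). split; [lra|split;[lra|]].
    intros y Hy. pose proof (norm_triang x y z). rewrite norm_sym in Hy. lra.
  - exists m. split; auto. intros w Hw. apply (H w w Hw). rewrite norm_sub_refl; lra.
Qed.

Lemma compact_ext {n} (C D : vec n -> Prop) : (forall x, C x <-> D x) -> is_compact C -> is_compact D.
Proof.
  intros E HC I O HO Hcov. destruct (HC I O HO) as [l Hl].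
  intros x Hx; apply Hcov, E; auto.
  exists l. intros x Hx; apply Hl, E; auto.
Qed.

Lemma compact_sub {n} (C P : vec n -> Prop) : is_compact C ->
  (forall x, C x -> ~ P x -> exists r, r > 0 /\ forall y, norm (vsub y x) < r -> ~ P y) ->
  is_compact (fun x => C x /\ P x).
Proof.
  intros HC Hsep I O HO Hcov.
  set (W := fun y => exists r, r > 0 /\ forall z, norm (vsub z y) < r -> ~ P z).
  set (O' := fun (j : option I) => match j with Some i => O i | None => W end).
  destruct (HC (option I) O') as [l' Hl'].
  - intros [i|]; simpl; auto. intros y [r [Hr Hy]].
    exists r. split; auto. intros y' Hy'. exists (r - norm (vsub y' y)). split. lra.
    intros z Hz. apply Hy. pose proof (norm_triang z y' y). lra.
  - intros x Hx. destruct (classic (P x)).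
    + destruct (Hcov x (conj Hx H)) as [i Hi]. exists (Some i); auto.
    + exists None. simpl. apply Hsep; auto.
  - exists (flat_map (fun o => match o with Some i => i :: nil | None => nil end) l').
    intros x [Hx Px]. destruct (Hl' x Hx) as [[i|] [Hin Hi]].
    + exists i. split; auto. apply in_flat_map. exists (Some i). simpl; auto.
    + destruct Hi as [r [Hr Hi]]. exfalso. apply (Hi x); auto. rewrite norm_sub_refl; lra.
Qed.

Definition tn {n} (i : Fin.t n) : nat := proj1_sig (Fin.to_nat i).

Lemma tn_F1 n : tn (@Fin.F1 n) = 0%nat.
Proof. reflexivity. Qed.

Lemma tn_FS n (i : Fin.t n) : tn (Fin.FS i) = S (tn i).
Proof. unfold tn. simpl. destruct (Fin.to_nat i); reflexivity. Qed.

Lemma tn_lt n (i : Fin.t n) : (tn i < n)%nat.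
Proof. unfold tn. destruct (Fin.to_nat i); simpl; auto. Qed.

Lemma telescope n (h : nat -> R) : fsum n (fun i => h (S (tn i)) - h (tn i)) = h n - h 0%nat.
Proof.
  revert h; induction n; intros h. simpl; lra.
  cbn [fsum]. rewrite tn_F1.
  pose proof (IHn (fun k => h (S k))) as E. simpl in E.
  rewrite (fsum_ext n _ (fun i => h (S (S (tn i))) - h (S (tn i)))).
  rewrite E. lra. intros i. rewrite tn_FS. reflexivity.
Qed.

Definition mix {n} (k : nat) (x w : vec n) : vec n :=
  fun j => if lt_dec (tn j) k then w j else x j.

Lemma mix_0 {n} (x w : vec n) : mix 0 x w = x.
Proof. apply functional_extensionality; intros j; unfold mix. destruct (lt_dec _ _); [lia|auto]. Qed.

Lemma mix_n {n} (x w : vec n) : mix n x w = w.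
Proof. apply functional_extensionality; intros j; unfold mix. pose proof (tn_lt n j). destruct (lt_dec _ _); [auto|lia]. Qed.

Lemma mix_S {n} (x w : vec n) i : mix (S (tn i)) x w = upd (mix (tn i) x w) i (w i - x i).
Proof.
  apply functional_extensionality; intros j; unfold mix, upd.
  destruct (Fin.eq_dec j i) as [->|Hne].
  - destruct (lt_dec (tn i) (S (tn i))); [|lia]. destruct (lt_dec (tn i) (tn i)); [lia|]. ring.
  - assert (tn j <> tn i). { intro E. apply Hne. apply Fin.to_nat_inj. exact E. }
    destruct (lt_dec (tn j) (S (tn i))); destruct (lt_dec (tn j) (tn i)); auto; lia.
Qed.

Lemma upd_upd {n} (m : vec n) i a b : upd (upd m i a) i b = upd m i (a + b).
Proof.
  apply functional_extensionality; intros j; unfold upd. destruct (Fin.eq_dec j i); ring.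
Qed.

Lemma upd_0 {n} (m : vec n) i : upd m i 0 = m.
Proof. apply functional_extensionality; intros j; unfold upd. destruct (Fin.eq_dec j i); ring. Qed.

Lemma deriv_shift (g : R -> R) h l : derivable_pt_lim (fun s => g (h + s)) 0 l -> derivable_pt_lim g h l.
Proof.
  intros H eps Heps. destruct (H eps Heps) as [d Hd]. exists d. intros k Hk Hkd.
  specialize (Hd k Hk Hkd). rewrite Rplus_0_l, Rplus_0_r in Hd. exact Hd.
Qed.

Lemma partial_line {n} (f : vec n -> R) i m h l :
  has_partial f i (upd m i h) l -> derivable_pt_lim (fun s => f (upd m i s)) h l.
Proof.
  intros H. apply deriv_shift. unfold has_partial in H.
  intros eps Heps. destruct (H eps Heps) as [d Hd]. exists d. intros k Hk Hkd.
  specialize (Hd k Hk Hkd). rewrite !upd_upd in Hd. assert (E: h + (0 + k) = h + k) by ring. rewrite E in *. exact Hd.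
Qed.

Lemma mvt_dir (g g' : R -> R) d : (forall h, Rabs h <= Rabs d -> derivable_pt_lim g h (g' h)) ->
  exists c, Rabs c <= Rabs d /\ g d - g 0 = g' c * d.
Proof.
  intros H. destruct (Rtotal_order d 0) as [Hd|[Hd|Hd]].
  - destruct (MVT_cor2 g g' d 0 Hd) as [c [E Hc]].
    { intros c Hc. apply H. rewrite (Rabs_left d) by lra. apply Rabs_le. lra. }
    exists c. split. rewrite (Rabs_left d) by lra. apply Rabs_le. lra. lra.
  - subst. exists 0. split. lra. ring.
  - destruct (MVT_cor2 g g' 0 d Hd) as [c [E Hc]].
    { intros c Hc. apply H. rewrite (Rabs_right d) by lra. apply Rabs_le. lra. }
    exists c. split. rewrite (Rabs_right d) by lra. apply Rabs_le. lra. lra.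
Qed.

Lemma step_dist {n} (x w : vec n) i c : Rabs c <= Rabs (w i - x i) ->
  norm (vsub (upd (mix (tn i) x w) i c) x) <= norm (vsub w x).
Proof.
  intros Hc. apply norm_le_comp. intros j. unfold vsub, upd, mix.
  destruct (Fin.eq_dec j i) as [->|Hne].
  - destruct (lt_dec (tn i) (tn i)); [lia|]. replace (x i + c - x i) with c by ring. auto.
  - destruct (lt_dec (tn j) (tn i)). lra. replace (x j - x j) with 0 by ring. rewrite Rabs_R0. apply Rabs_pos.
Qed.

Lemma CL {n} (U : vec n -> Prop) (f : vec n -> R) (D : Fin.t n -> vec n -> R) x w r :
  (forall i z, U z -> has_partial f i z (D i z)) ->
  (forall y, norm (vsub y x) < r -> U y) -> norm (vsub w x) < r ->
  exists xi : Fin.t n -> vec n, (forall i, norm (vsub (xi i) x) <= norm (vsub w x)) /\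
    f w - f x = fsum n (fun i => D i (xi i) * (w i - x i)).
Proof.
  intros Hp Hb Hw.
  assert (Hi : forall i, exists c, Rabs c <= Rabs (w i - x i) /\
     f (upd (mix (tn i) x w) i (w i - x i)) - f (upd (mix (tn i) x w) i 0) =
     D i (upd (mix (tn i) x w) i c) * (w i - x i)).
  { intros i. apply (mvt_dir (fun h => f (upd (mix (tn i) x w) i h))
                             (fun h => D i (upd (mix (tn i) x w) i h))).
    intros h Hh. apply partial_line. apply Hp. apply Hb.
    pose proof (step_dist x w i h Hh). lra. }
  set (cc := fun i => proj1_sig (constructive_indefinite_description _ (Hi i))).
  exists (fun i => upd (mix (tn i) x w) i (cc i)). split.
  - intros i. apply step_dist. unfold cc. destruct (constructive_indefinite_description _ (Hi i)) as [c [H1 H2]]. simpl. auto.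
  - rewrite <- (mix_n x w) at 1. rewrite <- (mix_0 x w) at 2.
    rewrite <- (telescope n (fun k => f (mix k x w))).
    apply fsum_ext. intros i. rewrite mix_S. rewrite <- (upd_0 (mix (tn i) x w) i) at 2.
    unfold cc. destruct (constructive_indefinite_description _ (Hi i)) as [c [H1 H2]]. simpl. auto.
Qed.

Lemma fin_min n (P : Fin.t n -> R -> Prop) :
  (forall i d d', 0 < d' <= d -> P i d -> P i d') ->
  (forall i, exists d, d > 0 /\ P i d) -> exists d, d > 0 /\ forall i, P i d.
Proof.
  revert P; induction n; intros P Hm H.
  - exists 1. split. lra. intros i; inversion i.
  - destruct (H Fin.F1) as [d1 [Hd1 P1]].
    destruct (IHn (fun i => P (Fin.FS i))) as [d2 [Hd2 P2]].
    + intros; eapply Hm; eauto.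
    + intros; apply H.
    + exists (Rmin d1 d2). split. apply Rmin_glb_lt; auto.
      intros i. pattern i. apply Fin.caseS'.
      * eapply Hm; [|exact P1]. split. apply Rmin_glb_lt; auto. apply Rmin_l.
      * intros p. eapply Hm; [|exact (P2 p)]. split. apply Rmin_glb_lt; auto. apply Rmin_r.
Qed.

Lemma lip_local {n} (U : vec n -> Prop) (f : vec n -> R) D x w r M :
  (forall i z, U z -> has_partial f i z (D i z)) ->
  (forall y, norm (vsub y x) < r -> U y /\ forall i, Rabs (D i y) <= M) ->
  norm (vsub w x) < r -> Rabs (f w - f x) <= INR n * M * norm (vsub w x).
Proof.
  intros Hp Hb Hw. destruct (CL U f D x w r Hp) as [xi [Hxi E]]; auto.
  intros y Hy; apply Hb; auto.
  rewrite E. eapply Rle_trans. apply fsum_abs.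
  rewrite Rmult_assoc. apply fsum_le_const. intros i. rewrite Rabs_mult.
  apply Rmult_le_compat. apply Rabs_pos. apply Rabs_pos.
  apply Hb. pose proof (Hxi i). lra.
  apply (norm_comp (vsub w x) i).
Qed.

Lemma chain {n} (U : vec n -> Prop) (f : vec n -> R) D (y : R -> vec n) y' t :
  is_open U -> (forall i z, U z -> has_partial f i z (D i z)) ->
  (forall i, continuous_on U (D i)) ->
  U (y t) -> (forall i, derivable_pt_lim (fun s => y s i) t (y' i)) ->
  derivable_pt_lim (fun s => f (y s)) t (fsum n (fun i => D i (y t) * y' i)).
Proof.
  intros HU Hp Hc Hyt Hy eps Heps.
  set (x := y t).
  destruct (HU x Hyt) as [r [Hr Hball]].
  set (A := fsum n (fun i => Rabs (y' i) + 1)).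
  set (B := fsum n (fun i => Rabs (D i x))).
  assert (HA : 0 <= A) by (apply fsum_nonneg; intros; pose proof (Rabs_pos (y' i)); lra).
  assert (HB : 0 <= B) by (apply fsum_nonneg; intros; apply Rabs_pos).
  set (e2 := eps / (2 * (A + 1))).
  set (e1 := Rmin 1 (eps / (2 * (B + 1)))).
  assert (He2 : e2 > 0) by (unfold e2; apply Rdiv_lt_0_compat; lra).
  assert (He1 : e1 > 0) by (unfold e1; apply Rmin_glb_lt; [lra|apply Rdiv_lt_0_compat; lra]).
  destruct (fin_min n (fun i d => forall h, h <> 0 -> Rabs h < d ->
      Rabs ((y (t + h) i - y t i) / h - y' i) < e1)) as [dq [Hdq Hq]].
  { intros i d d' Hd H h Hh Hhd. apply H; auto. lra. }
  { intros i. destruct (Hy i e1 He1) as [d Hd]. exists d. split. apply cond_pos. exact Hd. }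
  destruct (fin_min n (fun i d => forall z, U z -> norm (vsub z x) < d -> Rabs (D i z - D i x) < e2))
    as [dD [HdD HD]].
  { intros i d d' Hd H z Hz Hzd. apply H; auto. lra. }
  { intros i. destruct (Hc i x Hyt e2 He2) as [d [Hd H]]. exists d. split; auto. }
  set (m := Rmin r dD).
  assert (Hm : m > 0) by (unfold m; apply Rmin_glb_lt; auto).
  assert (Hd : 0 < Rmin dq (m / (A + 1))) by (apply Rmin_glb_lt; auto; apply Rdiv_lt_0_compat; lra).
  exists (mkposreal _ Hd). simpl. intros h Hh Hhd.
  assert (Hh1 : Rabs h < dq) by (eapply Rlt_le_trans; [exact Hhd|apply Rmin_l]).
  assert (Hh2 : Rabs h < m / (A + 1)) by (eapply Rlt_le_trans; [exact Hhd|apply Rmin_r]).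
  set (w := y (t + h)).
  set (q := fun i => (w i - x i) / h).
  assert (Hqb : forall i, Rabs (q i) <= Rabs (y' i) + 1).
  { intros i. specialize (Hq i h Hh Hh1). fold x w in Hq. fold (q i) in Hq.
    assert (e1 <= 1) by apply Rmin_l.
    pose proof (Rabs_triang_inv (q i) (y' i)). lra. }
  assert (Hwx : norm (vsub w x) <= Rabs h * A).
  { eapply Rle_trans. apply norm_le_sumabs. unfold A. rewrite <- fsum_scal.
    apply fsum_le. intros i. unfold vsub.
    replace (w i - x i) with (h * q i) by (unfold q; field; auto).
    rewrite Rabs_mult. apply Rmult_le_compat_l. apply Rabs_pos. auto. }
  assert (Hwm : norm (vsub w x) < m).
  { assert (Rabs h * A <= Rabs h * (A + 1)) by (pose proof (Rabs_pos h); nra).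
    assert (Rabs h * (A + 1) < m). { apply (Rmult_lt_compat_r (A+1)) in Hh2; [|lra].
      unfold Rdiv in Hh2. rewrite Rmult_assoc, Rinv_l in Hh2 by lra. lra. }
    lra. }
  assert (Hwr : norm (vsub w x) < r) by (pose proof (Rmin_l r dD); fold m in H; lra).
  destruct (CL U f D x w r Hp Hball Hwr) as [xi [Hxi E]].
  fold w x. replace ((f w - f x) / h) with (fsum n (fun i => D i (xi i) * q i)).
  2:{ rewrite E. unfold Rdiv. rewrite Rmult_comm, <- fsum_scal. apply fsum_ext. intros i.
      unfold q. field. auto. }
  rewrite <- fsum_minus.
  eapply Rle_lt_trans. apply fsum_abs.
  eapply Rle_lt_trans. apply (fsum_le _ _ (fun i => e2 * (Rabs (y' i) + 1) + Rabs (D i x) * e1)).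
  - intros i.
    replace (D i (xi i) * q i - D i x * y' i) with ((D i (xi i) - D i x) * q i + D i x * (q i - y' i)) by ring.
    eapply Rle_trans. apply Rabs_triang. rewrite !Rabs_mult.
    apply Rplus_le_compat.
    + apply Rmult_le_compat; try apply Rabs_pos; auto.
      left. apply HD. apply Hball. pose proof (Hxi i). lra.
      pose proof (Hxi i). pose proof (Rmin_r r dD). fold m in H0. lra.
    + apply Rmult_le_compat_l. apply Rabs_pos. left. apply Hq; auto.
  - rewrite fsum_plus, fsum_scal.
    rewrite (fsum_ext n (fun i => Rabs (D i x) * e1) (fun i => e1 * Rabs (D i x))) by (intros; ring).
    rewrite fsum_scal. fold A B.
    assert (e2 * A < eps / 2).
    { unfold e2. apply (Rmult_lt_reg_r (2 * (A + 1))). lra. field_simplify; lra. }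
    assert (e1 * B <= eps / 2 * (B / (B + 1))).
    { assert (e1 <= eps / (2 * (B + 1))) by apply Rmin_r.
      replace (eps / 2 * (B / (B + 1))) with (eps / (2 * (B + 1)) * B) by (field; lra). nra. }
    assert (eps / 2 * (B / (B + 1)) <= eps / 2).
    { assert (B / (B + 1) <= 1). { apply (Rmult_le_reg_r (B + 1)). lra. field_simplify; lra. } nra. }
    lra.
Qed.

Lemma pderiv_eq {n} (f : vec n -> R) i x l : has_partial f i x l -> pderiv f i x = l.
Proof.
  intros H. unfold pderiv.
  assert (E : exists l, has_partial f i x l) by eauto.
  pose proof (epsilon_spec (inhabits 0) _ E) as H2.
  eapply uniqueness_limite; eauto.
Qed.

Lemma fsum_single n (i : Fin.t n) a : fsum n (fun j => if Fin.eq_dec j i then a else 0) = a.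
Proof.
  induction n. inversion i.
  cbn [fsum]. revert IHn. pattern i. apply Fin.caseS'.
  - intros _. destruct (Fin.eq_dec Fin.F1 Fin.F1); [|congruence].
    rewrite (fsum_ext n _ (fun _ => 0)). rewrite fsum_zero; ring.
    intros j. destruct (Fin.eq_dec (Fin.FS j) Fin.F1); [discriminate|auto].
  - intros p IH. destruct (Fin.eq_dec Fin.F1 (Fin.FS p)); [discriminate|].
    rewrite (fsum_ext n _ (fun j => if Fin.eq_dec j p then a else 0)). rewrite (IH p). ring.
    intros j. destruct (Fin.eq_dec (Fin.FS j) (Fin.FS p)), (Fin.eq_dec j p); auto.
    apply Fin.FS_inj in e; congruence. subst; congruence.
Qed.

Lemma norm_upd {n} (x : vec n) i h : norm (vsub (upd x i h) x) = Rabs h.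
Proof.
  unfold norm, sumsq. rewrite (fsum_ext n _ (fun j => if Fin.eq_dec j i then h ^ 2 else 0)).
  rewrite fsum_single. rewrite <- sqrt_Rsqr_abs. unfold Rsqr. f_equal. ring.
  intros j. unfold vsub, upd. destruct (Fin.eq_dec j i); ring.
Qed.

Lemma has_partial_local {n} (U : vec n -> Prop) f g i x l : is_open U -> U x ->
  (forall y, U y -> f y = g y) -> has_partial f i x l -> has_partial g i x l.
Proof.
  intros HU Hx E H eps Heps. destruct (HU x Hx) as [r [Hr Hb]].
  destruct (H eps Heps) as [d Hd].
  assert (Hm : 0 < Rmin d r) by (apply Rmin_glb_lt; auto; apply cond_pos).
  exists (mkposreal _ Hm). simpl. intros h Hh Hhd.
  assert (Hh1 : Rabs h < d) by (eapply Rlt_le_trans; [exact Hhd|apply Rmin_l]).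
  assert (Hh2 : Rabs h < r) by (eapply Rlt_le_trans; [exact Hhd|apply Rmin_r]).
  rewrite <- !E. apply Hd; auto. rewrite upd_0; auto. apply Hb. rewrite Rplus_0_l, norm_upd. auto.
Qed.

Lemma continuous_on_ext {n} (U : vec n -> Prop) f g : (forall y, U y -> f y = g y) ->
  continuous_on U f -> continuous_on U g.
Proof.
  intros E H x Hx eps Heps. destruct (H x Hx eps Heps) as [d [Hd H2]].
  exists d; split; auto. intros y Hy Hyd. rewrite <- !E; auto.
Qed.

Lemma continuous_on_plus {n} (U : vec n -> Prop) f g :
  continuous_on U f -> continuous_on U g -> continuous_on U (fun x => f x + g x).
Proof.
  intros Hf Hg x Hx eps Heps.
  destruct (Hf x Hx (eps/2)) as [d1 [Hd1 H1]]. lra.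
  destruct (Hg x Hx (eps/2)) as [d2 [Hd2 H2]]. lra.
  exists (Rmin d1 d2). split. apply Rmin_glb_lt; auto.
  intros y Hy Hyd. pose proof (Rmin_l d1 d2). pose proof (Rmin_r d1 d2).
  specialize (H1 y Hy ltac:(lra)). specialize (H2 y Hy ltac:(lra)).
  replace (f y + g y - (f x + g x)) with ((f y - f x) + (g y - g x)) by ring.
  eapply Rle_lt_trans. apply Rabs_triang. lra.
Qed.

Lemma continuous_on_const {n} (U : vec n -> Prop) a : continuous_on U (fun _ => a).
Proof.
  intros x Hx eps Heps. exists 1. split. lra. intros. replace (a - a) with 0 by ring. rewrite Rabs_R0; lra.
Qed.

Lemma continuous_on_mult {n} (U : vec n -> Prop) f g :
  continuous_on U f -> continuous_on U g -> continuous_on U (fun x => f x * g x).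
Proof.
  intros Hf Hg x Hx eps Heps.
  set (a := Rabs (f x)). set (b := Rabs (g x)).
  assert (Ha : 0 <= a) by apply Rabs_pos. assert (Hb : 0 <= b) by apply Rabs_pos.
  set (e := Rmin 1 (eps / (2 * (a + b + 1)))).
  assert (He : e > 0) by (apply Rmin_glb_lt; [lra|apply Rdiv_lt_0_compat; lra]).
  assert (He1 : e <= 1) by apply Rmin_l.
  assert (He2 : e * (a + b + 1) <= eps / 2).
  { assert (e <= eps / (2 * (a + b + 1))) by apply Rmin_r.
    replace (eps / 2) with (eps / (2 * (a + b + 1)) * (a + b + 1)) by (field; lra). nra. }
  destruct (Hf x Hx e He) as [d1 [Hd1 H1]].
  destruct (Hg x Hx e He) as [d2 [Hd2 H2]].
  exists (Rmin d1 d2). split. apply Rmin_glb_lt; auto.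
  intros y Hy Hyd. pose proof (Rmin_l d1 d2). pose proof (Rmin_r d1 d2).
  specialize (H1 y Hy ltac:(lra)). specialize (H2 y Hy ltac:(lra)).
  replace (f y * g y - f x * g x) with ((f y - f x) * (g y - g x) + (f y - f x) * g x + f x * (g y - g x)) by ring.
  eapply Rle_lt_trans. apply Rabs_triang. eapply Rle_lt_trans. apply Rplus_le_compat_r. apply Rabs_triang.
  rewrite !Rabs_mult. fold a b.
  assert (Rabs (f y - f x) * Rabs (g y - g x) <= e * e) by (apply Rmult_le_compat; try apply Rabs_pos; lra).
  assert (Rabs (f y - f x) * b <= e * b) by (apply Rmult_le_compat_r; lra).
  assert (a * Rabs (g y - g x) <= a * e) by (apply Rmult_le_compat_l; lra).
  nra.
Qed.

Lemma continuous_on_opp {n} (U : vec n -> Prop) f :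
  continuous_on U f -> continuous_on U (fun x => - f x).
Proof.
  intros H. apply (continuous_on_ext U (fun x => (-1) * f x)). intros; ring.
  apply continuous_on_mult; auto. apply continuous_on_const.
Qed.

Lemma continuous_on_minus {n} (U : vec n -> Prop) f g :
  continuous_on U f -> continuous_on U g -> continuous_on U (fun x => f x - g x).
Proof. intros. apply continuous_on_plus; auto. apply continuous_on_opp; auto. Qed.

Lemma continuous_on_fsum {n} (U : vec n -> Prop) m (f : Fin.t m -> vec n -> R) :
  (forall i, continuous_on U (f i)) -> continuous_on U (fun x => fsum m (fun i => f i x)).
Proof.
  revert f; induction m; intros f H; simpl. apply continuous_on_const.
  apply continuous_on_plus; auto.
Qed.

Record Hyp {n} (U : vec n -> Prop) (X : vec n -> vec n) (V : vec n -> R) (c : R) : Prop := {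
  hU : is_open U;
  hX : Ck_field 1 U X;
  hV : Ck 2 U V;
  hV0 : forall x, U x -> 0 <= V x;
  hperp : forall x, U x -> dot (grad V x) (X x) = 0;
  hc : c > 0;
  hK : is_compact (fun x => U x /\ 0 <= V x <= c)
}.

Definition FF {n} (X : vec n -> vec n) (V : vec n -> R) (x : vec n) : vec n := vsub (X x) (grad V x).

Lemma Hyp_DV {n} U X V c : @Hyp n U X V c -> exists DV : Fin.t n -> vec n -> R,
  (forall i z, U z -> has_partial V i z (DV i z)) /\ (forall i, Ck 1 U (DV i)) /\
  (forall i z, U z -> grad V z i = DV i z).
Proof.
  intros H. destruct (hV _ _ _ _ H) as [_ [D [H1 H2]]]. exists D. split; auto. split; auto.
  intros i z Hz. unfold grad. apply pderiv_eq. auto.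
Qed.

Lemma Hyp_V_cont {n} U X V c : @Hyp n U X V c -> continuous_on U V.
Proof. intros H. destruct (hV _ _ _ _ H); auto. Qed.

Lemma F_C1 {n} U X V c : @Hyp n U X V c -> forall i, continuous_on U (fun x => FF X V x i) /\
  exists DF : Fin.t n -> vec n -> R,
  (forall j z, U z -> has_partial (fun x => FF X V x i) j z (DF j z)) /\ (forall j, continuous_on U (DF j)).
Proof.
  intros H i. destruct (Hyp_DV _ _ _ _ H) as [DV [H1 [H2 H3]]].
  destruct (hX _ _ _ _ H i) as [HXc [DX [HX1 HX2]]].
  destruct (H2 i) as [HDc [DD [HD1 HD2]]].
  assert (E : forall y, U y -> X y i - DV i y = FF X V y i).
  { intros y Hy. unfold FF, vsub. rewrite H3; auto. }
  split.
  - eapply continuous_on_ext. exact E. apply continuous_on_minus; auto.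
  - exists (fun j z => DX j z - DD j z). split.
    + intros j z Hz. eapply has_partial_local. apply (hU _ _ _ _ H). auto. exact E.
      unfold has_partial. apply derivable_pt_lim_minus; [apply HX1|apply HD1]; auto.
    + intros j. apply continuous_on_minus; [apply HX2|apply HD2].
Qed.

Lemma local_bound {n} (U : vec n -> Prop) g x : continuous_on U g -> U x ->
  exists d, d > 0 /\ forall y, U y -> norm (vsub y x) < d -> Rabs (g y) <= Rabs (g x) + 1.
Proof.
  intros H Hx. destruct (H x Hx 1) as [d [Hd H2]]. lra. exists d; split; auto.
  intros y Hy Hyd. specialize (H2 y Hy Hyd). pose proof (Rabs_triang_inv (g y) (g x)). lra.
Qed.

Lemma norm_minus_le {n} (a b : vec n) : norm (vsub a b) <= norm a + norm b.
Proof.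
  pose proof (norm_triang a (fun _ => 0) b).
  replace (vsub a (fun _ => 0)) with a in H by (apply functional_extensionality; intros; unfold vsub; ring).
  rewrite (norm_sym (fun _ => 0) b) in H.
  replace (vsub b (fun _ => 0)) with b in H by (apply functional_extensionality; intros; unfold vsub; ring).
  auto.
Qed.

Lemma local_lip_F {n} U X V c : @Hyp n U X V c -> forall x, U x ->
  exists d, d > 0 /\ forall y z, norm (vsub y x) < d -> norm (vsub z x) < d ->
    norm (vsub (FF X V z) (FF X V y)) <= INR n * (1 / d) * norm (vsub z y).
Proof.
  intros H x Hx. destruct (hU _ _ _ _ H x Hx) as [r0 [Hr0 Hb0]].
  destruct (fin_min n (fun i d => forall y z, norm (vsub y x) < d -> norm (vsub z x) < d ->
      Rabs (FF X V z i - FF X V y i) <= (1 / d) * norm (vsub z y))) as [d [Hd Hall]].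
  - intros i d d' Hd' Hi y z Hy Hz. eapply Rle_trans. apply Hi; lra.
    apply Rmult_le_compat_r. apply norm_nonneg. unfold Rdiv. rewrite !Rmult_1_l.
    apply Rinv_le_contravar; lra.
  - intros i. destruct (F_C1 _ _ _ _ H i) as [_ [DF [HDF1 HDF2]]].
    destruct (fin_min n (fun j d => forall y, U y -> norm (vsub y x) < d -> Rabs (DF j y) <= Rabs (DF j x) + 1))
      as [dj [Hdj Hj]].
    + intros j d d' Hd' Hj y Hy Hyd. apply Hj; auto. lra.
    + intros j. apply local_bound; auto.
    + set (M := fsum n (fun j => Rabs (DF j x) + 1)).
      assert (HM : forall j, Rabs (DF j x) + 1 <= M).
      { intros j. apply (fsum_ge_term n (fun j => Rabs (DF j x) + 1)). intros; pose proof (Rabs_pos (DF j0 x)); lra. }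
      assert (HM0 : 0 <= M) by (specialize (HM Fin.F1) || idtac; unfold M; apply fsum_nonneg; intros; pose proof (Rabs_pos (DF i0 x)); lra).
      set (rho := Rmin r0 dj).
      assert (Hrho : rho > 0) by (unfold rho; apply Rmin_glb_lt; auto).
      assert (HnM : 0 <= INR n * M) by (apply Rmult_le_pos; auto; apply pos_INR).
      exists (Rmin (rho / 3) (1 / (INR n * M + 1))). split.
      { apply Rmin_glb_lt. lra. apply Rdiv_lt_0_compat; lra. }
      intros y z Hy Hz.
      assert (Hy' : norm (vsub y x) < rho / 3) by (eapply Rlt_le_trans; [exact Hy|apply Rmin_l]).
      assert (Hz' : norm (vsub z x) < rho / 3) by (eapply Rlt_le_trans; [exact Hz|apply Rmin_l]).
      assert (Hinv : INR n * M <= 1 / Rmin (rho / 3) (1 / (INR n * M + 1))).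
      { assert (0 < Rmin (rho / 3) (1 / (INR n * M + 1))) by (apply Rmin_glb_lt; [lra|apply Rdiv_lt_0_compat; lra]).
        assert (Rmin (rho / 3) (1 / (INR n * M + 1)) <= 1 / (INR n * M + 1)) by apply Rmin_r.
        set (m := Rmin (rho / 3) (1 / (INR n * M + 1))) in *.
        assert (INR n * M * m <= INR n * M * (1 / (INR n * M + 1))) by (apply Rmult_le_compat_l; auto).
        assert (INR n * M * (1 / (INR n * M + 1)) <= 1).
        { replace (INR n * M * (1 / (INR n * M + 1))) with (1 - 1 / (INR n * M + 1)) by (field; lra).
          assert (0 < 1 / (INR n * M + 1)) by (apply Rdiv_lt_0_compat; lra). lra. }
        apply (Rmult_le_reg_r m); auto. replace (1 / m * m) with 1 by (field; lra).
        lra. }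
      eapply Rle_trans. apply (lip_local U (fun x => FF X V x i) DF y z (2 * rho / 3) M); auto.
      * intros w Hw. assert (Hwx : norm (vsub w x) < rho).
        { pose proof (norm_triang w y x). lra. }
        assert (Hr1 : rho <= r0) by apply Rmin_l. assert (Hr2 : rho <= dj) by apply Rmin_r.
        assert (Uw : U w) by (apply Hb0; lra).
        split; auto. intros j. eapply Rle_trans. apply Hj; auto. lra.
        apply HM.
      * pose proof (norm_triang z x y) as T. rewrite (norm_sym x y) in T. lra.
      * apply Rmult_le_compat_r. apply norm_nonneg. auto.
  - exists d. split; auto. intros y z Hy Hz.
    replace (INR n * (1 / d) * norm (vsub z y)) with (INR n * ((1 / d) * norm (vsub z y))) by ring.
    apply norm_bound_comp. apply Rmult_le_pos. left; apply Rdiv_lt_0_compat; lra. apply norm_nonneg.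
    intros i. unfold vsub at 1. apply Hall; auto.
Qed.

Definition KK {n} (U : vec n -> Prop) (V : vec n -> R) c := fun x => U x /\ 0 <= V x <= c.

Lemma F_bound {n} U X V c : @Hyp n U X V c -> exists B, B >= 0 /\ forall x, KK U V c x -> norm (FF X V x) <= B.
Proof.
  intros H.
  destruct (LN (KK U V c) (fun m y => norm (FF X V y) <= 1 / m) (hK _ _ _ _ H)) as (d & m & Hd & Hm & HL).
  - intros m m' y Hm' Hy. eapply Rle_trans; [exact Hy|]. unfold Rdiv; rewrite !Rmult_1_l.
    apply Rinv_le_contravar; lra.
  - intros x [Hx _]. destruct (hU _ _ _ _ H x Hx) as [r0 [Hr0 Hb0]].
    destruct (fin_min n (fun i d => forall y, U y -> norm (vsub y x) < d -> Rabs (FF X V y i) <= Rabs (FF X V x i) + 1))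
      as [d [Hd Hall]].
    + intros i d d' Hd' Hi y Hy Hyd. apply Hi; auto. lra.
    + intros i. apply (local_bound U (fun y => FF X V y i)); auto. apply (F_C1 _ _ _ _ H i).
    + set (M := fsum n (fun i => Rabs (FF X V x i) + 1)).
      assert (HM0 : 0 <= M) by (unfold M; apply fsum_nonneg; intros; pose proof (Rabs_pos (FF X V x i)); lra).
      exists (Rmin r0 d), (1 / (M + 1)). split. apply Rmin_glb_lt; auto. split. apply Rdiv_lt_0_compat; lra.
      intros y Hy. replace (1 / (1 / (M + 1))) with (M + 1) by (field; lra).
      assert (Uy : U y) by (apply Hb0; eapply Rlt_le_trans; [exact Hy|apply Rmin_l]).
      eapply Rle_trans. apply norm_le_sumabs. unfold M. assert (fsum n (fun i => Rabs (FF X V y i)) <= fsum n (fun i => Rabs (FF X V x i) + 1)).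
      apply fsum_le. intros i. apply Hall; auto. eapply Rlt_le_trans; [exact Hy|apply Rmin_r]. lra.
  - exists (1 / m). split. left; apply Rdiv_lt_0_compat; lra. intros x Hx. apply (HL x x Hx). rewrite norm_sub_refl; lra.
Qed.

Lemma F_lip {n} U X V c : @Hyp n U X V c -> exists L, L >= 0 /\ forall y z, KK U V c y -> KK U V c z ->
  norm (vsub (FF X V z) (FF X V y)) <= L * norm (vsub z y).
Proof.
  intros H. destruct (F_bound _ _ _ _ H) as [B [HB0 HB]].
  destruct (LN (KK U V c) (fun m y => forall z, norm (vsub z y) < m ->
      norm (vsub (FF X V z) (FF X V y)) <= (1 / m) * norm (vsub z y)) (hK _ _ _ _ H)) as (d & m & Hd & Hm & HL).
  - intros m m' y Hm' Hy z Hz. eapply Rle_trans. apply Hy. lra. apply Rmult_le_compat_r. apply norm_nonneg.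
    unfold Rdiv; rewrite !Rmult_1_l. apply Rinv_le_contravar; lra.
  - intros x [Hx _]. destruct (local_lip_F _ _ _ _ H x Hx) as [r [Hr Hl]].
    set (L := INR n * (1 / r)).
    assert (HL0 : 0 <= L) by (apply Rmult_le_pos; [apply pos_INR|left; apply Rdiv_lt_0_compat; lra]).
    exists (r / 2), (Rmin (r / 2) (1 / (L + 1))). split. lra. split.
    apply Rmin_glb_lt. lra. apply Rdiv_lt_0_compat; lra.
    intros y Hy z Hz. set (m := Rmin (r / 2) (1 / (L + 1))) in *.
    assert (Hm0 : 0 < m) by (apply Rmin_glb_lt; [lra|apply Rdiv_lt_0_compat; lra]).
    assert (Hm1 : m <= r / 2) by apply Rmin_l. assert (Hm2 : m <= 1 / (L + 1)) by apply Rmin_r.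
    eapply Rle_trans. apply Hl. lra. pose proof (norm_triang z y x). lra.
    apply Rmult_le_compat_r. apply norm_nonneg.
    assert (L * m <= 1).
    { assert (L * m <= L * (1 / (L + 1))) by (apply Rmult_le_compat_l; auto).
      assert (L * (1 / (L + 1)) <= 1).
      { replace (L * (1 / (L + 1))) with (1 - 1 / (L + 1)) by (field; lra).
        assert (0 < 1 / (L + 1)) by (apply Rdiv_lt_0_compat; lra). lra. }
      lra. }
    apply (Rmult_le_reg_r m); auto. replace (1 / m * m) with 1 by (field; lra). fold L. lra.
  - exists (1 / m + 2 * B / m). split.
    { assert (0 < 1 / m) by (apply Rdiv_lt_0_compat; lra). assert (0 <= 2 * B / m) by (unfold Rdiv; apply Rmult_le_pos; [lra|left; apply Rinv_0_lt_compat; lra]). lra. }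
    intros y z Hy Hz. destruct (Rlt_le_dec (norm (vsub z y)) m).
    + eapply Rle_trans. apply (HL y y Hy). rewrite norm_sub_refl; lra. auto.
      apply Rmult_le_compat_r. apply norm_nonneg. assert (0 <= 2 * B / m) by (unfold Rdiv; apply Rmult_le_pos; [lra|left; apply Rinv_0_lt_compat; lra]). lra.
    + eapply Rle_trans. apply norm_minus_le. pose proof (HB y Hy). pose proof (HB z Hz).
      assert (2 * B <= 2 * B / m * norm (vsub z y)).
      { replace (2 * B / m * norm (vsub z y)) with (2 * B * (norm (vsub z y) / m)) by (field; lra).
        assert (1 <= norm (vsub z y) / m). { apply (Rmult_le_reg_r m). lra. field_simplify; lra. }
        nra. }
      assert (0 <= 1 / m * norm (vsub z y)) by (apply Rmult_le_pos; [left; apply Rdiv_lt_0_compat; lra|apply norm_nonneg]).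
      lra.
Qed.

Lemma sol_V_deriv {n} U X V c (y : R -> vec n) t : @Hyp n U X V c -> U (y t) ->
  (forall i, derivable_pt_lim (fun s => y s i) t (FF X V (y t) i)) ->
  derivable_pt_lim (fun s => V (y s)) t (- sumsq (grad V (y t))).
Proof.
  intros H Hy Hd. destruct (Hyp_DV _ _ _ _ H) as [DV [H1 [H2 H3]]].
  replace (- sumsq (grad V (y t))) with (fsum n (fun i => DV i (y t) * FF X V (y t) i)).
  apply (chain U); auto. apply (hU _ _ _ _ H). intros i; destruct (H2 i); auto.
  pose proof (hperp _ _ _ _ H (y t) Hy). unfold dot in H0. unfold sumsq, FF, vsub.
  rewrite <- (Rplus_0_l (- _)). rewrite <- H0. rewrite <- fsum_opp, <- fsum_plus.
  apply fsum_ext. intros i. rewrite H3; auto. ring.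
Qed.

Lemma sol_V_noninc {n} U X V c x0 (y : R -> vec n) : @Hyp n U X V c ->
  is_solution U (FF X V) x0 y -> forall a b, 0 <= a <= b -> V (y b) <= V (y a).
Proof.
  intros H [H0 Hs] a b Hab. destruct (Req_dec a b) as [->|Hne]. lra.
  destruct (MVT_cor2 (fun s => V (y s)) (fun s => - sumsq (grad V (y s))) a b) as [t [E Ht]]. lra.
  { intros t Ht. destruct (Hs t ltac:(lra)) as [Hu Hd]. apply (sol_V_deriv U X V c); auto. }
  pose proof (sumsq_nonneg (grad V (y t))). simpl in E. nra.
Qed.

Lemma sol_in_K {n} U X V c x0 (y : R -> vec n) : @Hyp n U X V c ->
  is_solution U (FF X V) x0 y -> V x0 <= c -> forall t, 0 <= t -> KK U V c (y t) /\ V (y t) <= V x0.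
Proof.
  intros H Hs Hc t Ht. pose proof (sol_V_noninc _ _ _ _ _ _ H Hs 0 t ltac:(lra)).
  destruct Hs as [E Hs]. rewrite E in H0. destruct (Hs t Ht) as [Hu _].
  split; [split|]; auto. split. apply (hV0 _ _ _ _ H); auto. lra.
Qed.

Lemma sol_shift {n} U F x0 (y : R -> vec n) a : is_solution U F x0 y -> 0 <= a ->
  is_solution U F (y a) (fun s => y (a + s)).
Proof.
  intros [E Hs] Ha. split. rewrite Rplus_0_r; auto.
  intros t Ht. destruct (Hs (a + t) ltac:(lra)) as [Hu Hd]. split; auto.
  intros i eps Heps. destruct (Hd i eps Heps) as [d Hdd]. exists d. intros h Hh Hhd.
  specialize (Hdd h Hh Hhd). rewrite Rplus_assoc in Hdd. exact Hdd.
Qed.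

Lemma deriv_fsum n (g : Fin.t n -> R -> R) g' t :
  (forall i, derivable_pt_lim (g i) t (g' i)) ->
  derivable_pt_lim (fun s => fsum n (fun i => g i s)) t (fsum n g').
Proof.
  revert g g'; induction n; intros g g' H; simpl.
  - apply derivable_pt_lim_const.
  - apply derivable_pt_lim_plus. apply H. apply (IHn (fun i => g (Fin.FS i))). intros; apply H.
Qed.

Lemma gronwall {n} U X V c L x0 z0 (y z : R -> vec n) : @Hyp n U X V c -> L >= 0 ->
  (forall y z, KK U V c y -> KK U V c z -> norm (vsub (FF X V z) (FF X V y)) <= L * norm (vsub z y)) ->
  is_solution U (FF X V) x0 y -> is_solution U (FF X V) z0 z -> V x0 <= c -> V z0 <= c ->
  forall t, 0 <= t -> sumsq (vsub (y t) (z t)) <= sumsq (vsub x0 z0) * exp ((1 + L ^ 2) * t).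
Proof.
  intros H HL Hlip Hy Hz Hx0 Hz0 t Ht.
  set (k := 1 + L ^ 2).
  set (u := fun s => sumsq (vsub (y s) (z s))).
  set (u' := fun s => fsum n (fun i => 2 * (y s i - z s i) * (FF X V (y s) i - FF X V (z s) i))).
  assert (Hu : forall s, 0 <= s -> derivable_pt_lim u s (u' s)).
  { intros s Hs. unfold u, u', sumsq. apply deriv_fsum. intros i.
    destruct (proj2 Hy s Hs) as [_ Hy']. destruct (proj2 Hz s Hs) as [_ Hz'].
    unfold vsub. replace (2 * (y s i - z s i) * (FF X V (y s) i - FF X V (z s) i)) with
      (INR 2 * (y s i - z s i) ^ (pred 2) * (FF X V (y s) i - FF X V (z s) i)) by (simpl; ring).
    apply (derivable_pt_lim_comp (fun s => y s i - z s i) (fun a => a ^ 2)).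
    apply derivable_pt_lim_minus; auto. apply derivable_pt_lim_pow. }
  assert (Hle : forall s, 0 <= s -> u' s <= k * u s).
  { intros s Hs. destruct (sol_in_K _ _ _ _ _ _ H Hy Hx0 s Hs) as [Ky _].
    destruct (sol_in_K _ _ _ _ _ _ H Hz Hz0 s Hs) as [Kz _].
    pose proof (Hlip (z s) (y s) Kz Ky).
    assert (sumsq (vsub (FF X V (y s)) (FF X V (z s))) <= L ^ 2 * u s).
    { rewrite <- norm_sq. unfold u. rewrite <- norm_sq.
      pose proof (norm_nonneg (vsub (FF X V (y s)) (FF X V (z s)))).
      pose proof (norm_nonneg (vsub (y s) (z s))). nra. }
    assert (u' s <= u s + sumsq (vsub (FF X V (y s)) (FF X V (z s)))).
    { unfold u', u, sumsq. rewrite <- fsum_plus. apply fsum_le. intros i. unfold vsub.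
      pose proof (pow2_ge_0 (y s i - z s i - (FF X V (y s) i - FF X V (z s) i))). nra. }
    unfold k. lra. }
  set (w := fun s => u s * exp (- k * s)).
  assert (Hw : forall s, 0 <= s -> derivable_pt_lim w s ((u' s - k * u s) * exp (- k * s))).
  { intros s Hs. unfold w. replace ((u' s - k * u s) * exp (- k * s)) with
      (u' s * exp (- k * s) + u s * (exp (- k * s) * (- k))) by ring.
    apply (derivable_pt_lim_mult u (fun s => exp (- k * s))). auto.
    apply (derivable_pt_lim_comp (fun s => - k * s) exp). 
    pose proof (derivable_pt_lim_scal id (-k) s 1 (derivable_pt_lim_id s)) as Hl.
    unfold mult_real_fct, id in Hl. rewrite Rmult_1_r in Hl. exact Hl.
    apply derivable_pt_lim_exp. }
  assert (w t <= w 0).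
  { destruct (Req_dec t 0) as [->|Hne]. lra.
    destruct (MVT_cor2 w (fun s => (u' s - k * u s) * exp (- k * s)) 0 t) as [s [E Hs]]. lra.
    intros s Hs. apply Hw; lra.
    pose proof (Hle s ltac:(lra)). pose proof (exp_pos (- k * s)).
    assert ((u' s - k * u s) * exp (- k * s) <= 0).
    { nra. }
    assert ((u' s - k * u s) * exp (- k * s) * (t - 0) <= 0) by nra. lra. }
  unfold w in H0. rewrite Rmult_0_r, exp_0, Rmult_1_r in H0.
  unfold u in H0. destruct Hy as [Ey _]. destruct Hz as [Ez _]. rewrite Ey, Ez in H0.
  assert (exp (- k * t) * exp (k * t) = 1) by (rewrite <- exp_plus; replace (- k * t + k * t) with 0 by ring; apply exp_0).
  pose proof (exp_pos (k * t)). fold k.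
  apply (Rmult_le_compat_r (exp (k * t))) in H0; [|lra].
  replace (sumsq (vsub (y t) (z t)) * exp (- k * t) * exp (k * t)) with (sumsq (vsub (y t) (z t))) in H0.
  auto. rewrite Rmult_assoc, H1. ring.
Qed.


Definition mcs {n} (K : vec n -> Prop) (f : vec n -> R) (L : R) (z : vec n) : R :=
  - epsilon (inhabits 0) (is_lub (fun r => exists y, K y /\ r = - (f y + L * norm (vsub z y)))).

Lemma mcs_lub {n} K f L B (y0 : vec n) z : K y0 -> L >= 0 -> (forall y, K y -> - B <= f y) ->
  is_lub (fun r => exists y, K y /\ r = - (f y + L * norm (vsub z y))) (- mcs K f L z).
Proof.
  intros Hy0 HL HB. unfold mcs. rewrite Ropp_involutive. apply epsilon_spec.
  destruct (completeness (fun r => exists y, K y /\ r = - (f y + L * norm (vsub z y)))) as [m Hm].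
  - exists B. intros r [y [Hy ->]]. pose proof (HB y Hy). pose proof (norm_nonneg (vsub z y)). nra.
  - exists (- (f y0 + L * norm (vsub z y0))). eauto.
  - eauto.
Qed.

Lemma mcs_le {n} K f L B (y0 : vec n) z y : K y0 -> L >= 0 -> (forall y, K y -> - B <= f y) ->
  K y -> mcs K f L z <= f y + L * norm (vsub z y).
Proof.
  intros Hy0 HL HB Hy. destruct (mcs_lub K f L B y0 z Hy0 HL HB) as [H1 _].
  assert (- (f y + L * norm (vsub z y)) <= - mcs K f L z) by (apply H1; eauto). lra.
Qed.

Lemma mcs_ge {n} K f L B (y0 : vec n) z m : K y0 -> L >= 0 -> (forall y, K y -> - B <= f y) ->
  (forall y, K y -> m <= f y + L * norm (vsub z y)) -> m <= mcs K f L z.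
Proof.
  intros Hy0 HL HB H. destruct (mcs_lub K f L B y0 z Hy0 HL HB) as [_ H2].
  assert (- mcs K f L z <= - m). { apply H2. intros r [y [Hy ->]]. specialize (H y Hy). lra. } lra.
Qed.

Lemma mcs_eq {n} K f L B (y0 : vec n) z : K y0 -> L >= 0 -> (forall y, K y -> - B <= f y) ->
  (forall y z, K y -> K z -> Rabs (f z - f y) <= L * norm (vsub z y)) ->
  K z -> mcs K f L z = f z.
Proof.
  intros Hy0 HL HB Hl Hz. apply Rle_antisym.
  - eapply Rle_trans. apply (mcs_le K f L B y0 z z); auto. rewrite norm_sub_refl. lra.
  - apply (mcs_ge K f L B y0); auto. intros y Hy. specialize (Hl y z Hy Hz).
    assert (f z - f y <= L * norm (vsub z y)) by (eapply Rle_trans; [apply Rle_abs|]; auto).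
    lra.
Qed.

Lemma mcs_lip {n} K f L B (y0 : vec n) z z' : K y0 -> L >= 0 -> (forall y, K y -> - B <= f y) ->
  Rabs (mcs K f L z - mcs K f L z') <= L * norm (vsub z z').
Proof.
  intros Hy0 HL HB.
  assert (forall a b, mcs K f L a - L * norm (vsub a b) <= mcs K f L b).
  { intros a b. apply (mcs_ge K f L B y0); auto. intros y Hy.
    pose proof (mcs_le K f L B y0 a y Hy0 HL HB Hy). pose proof (norm_triang a b y). nra. }
  pose proof (H z z'). pose proof (H z' z). rewrite norm_sym in H1. apply Rabs_le. lra.
Qed.

Lemma cont_pt_intro (f : R -> R) x :
  (forall eps, eps > 0 -> exists d, d > 0 /\ forall y, Rabs (y - x) < d -> Rabs (f y - f x) < eps) ->
  continuity_pt f x.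
Proof.
  intros H eps Heps. destruct (H eps Heps) as [d [Hd H2]]. exists d. split; auto.
  intros y [_ Hy]. simpl in *. unfold Rdist in *. apply H2. auto.
Qed.

Lemma cont_pt_elim (f : R -> R) x : continuity_pt f x ->
  forall eps, eps > 0 -> exists d, d > 0 /\ forall y, Rabs (y - x) < d -> Rabs (f y - f x) < eps.
Proof.
  intros H eps Heps. destruct (H eps Heps) as [d [Hd H2]]. exists d. split; auto.
  intros y Hy. destruct (Req_dec y x) as [->|Hne].
  - replace (f x - f x) with 0 by ring. rewrite Rabs_R0; lra.
  - apply (H2 y). split. split. exact I. auto. simpl; unfold Rdist; auto.
Qed.

Lemma cont_G {n} (G : vec n -> vec n) L (phi : R -> vec n) i t :
  (forall i z z', Rabs (G z i - G z' i) <= L * norm (vsub z z')) -> L >= 0 ->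
  (forall j, continuity_pt (fun s => phi s j) t) -> continuity_pt (fun s => G (phi s) i) t.
Proof.
  intros HG HL Hc. apply cont_pt_intro. intros eps Heps.
  set (e := eps / (INR n * L + 1)).
  assert (He : e > 0) by (unfold e; apply Rdiv_lt_0_compat; [lra|]; pose proof (pos_INR n); nra).
  destruct (fin_min n (fun j d => forall y, Rabs (y - t) < d -> Rabs (phi y j - phi t j) < e)) as [d [Hd H]].
  - intros j d d' Hd' H y Hy. apply H. lra.
  - intros j. apply (cont_pt_elim _ _ (Hc j) e He).
  - exists d. split; auto. intros y Hy. eapply Rle_lt_trans. apply HG.
    assert (norm (vsub (phi y) (phi t)) <= INR n * e).
    { apply norm_bound_comp. lra. intros j. unfold vsub. left. apply H; auto. }
    assert (INR n * L * e < eps).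
    { unfold e. apply (Rmult_lt_reg_r (INR n * L + 1)). pose proof (pos_INR n); nra.
      field_simplify. lra. pose proof (pos_INR n); nra. }
    nra.
Qed.

Lemma deriv_bound_pos (H h : R -> R) K p : H 0 = 0 -> K >= 0 ->
  (forall s, 0 <= s -> derivable_pt_lim H s (h s)) ->
  (forall s, 0 <= s -> Rabs (h s) <= K * s ^ p / INR (fact p)) ->
  forall t, 0 <= t -> Rabs (H t) <= K * t ^ (S p) / INR (fact (S p)).
Proof.
  intros H0 HK Hd Hb t Ht.
  set (P := fun s => K * s ^ (S p) / INR (fact (S p))).
  assert (HP : forall s, derivable_pt_lim P s (K * s ^ p / INR (fact p))).
  { intros s. unfold P.
    replace (K * s ^ p / INR (fact p)) with (K / INR (fact (S p)) * (INR (S p) * s ^ (pred (S p)))).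
    2:{ simpl pred. rewrite fact_simpl, mult_INR. field. split. apply INR_fact_neq_0. apply not_0_INR; lia. }
    assert (E : (fun s => K * s ^ S p / INR (fact (S p))) = mult_real_fct (K / INR (fact (S p))) (fun s => s ^ S p)).
    { apply functional_extensionality; intros; unfold mult_real_fct; field. apply INR_fact_neq_0. }
    rewrite E. apply derivable_pt_lim_scal. apply derivable_pt_lim_pow. }
  destruct (Req_dec t 0) as [->|Htn].
  { rewrite H0, Rabs_R0. simpl. rewrite Rmult_0_l, Rmult_0_r. unfold Rdiv. rewrite Rmult_0_l. lra. }
  destruct (MVT_cor2 (fun s => P s - H s) (fun s => K * s ^ p / INR (fact p) - h s) 0 t) as [c1 [E1 Hc1]]. lra.
  { intros c Hc. apply derivable_pt_lim_minus; auto. apply Hd; lra. }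
  destruct (MVT_cor2 (fun s => P s + H s) (fun s => K * s ^ p / INR (fact p) + h s) 0 t) as [c2 [E2 Hc2]]. lra.
  { intros c Hc. apply derivable_pt_lim_plus; auto. apply Hd; lra. }
  assert (P 0 = 0) by (unfold P; simpl; unfold Rdiv; ring).
  pose proof (Hb c1 ltac:(lra)). pose proof (Hb c2 ltac:(lra)).
  pose proof (Rle_abs (h c1)). pose proof (Rle_abs (- h c1)). rewrite Rabs_Ropp in H5.
  pose proof (Rle_abs (h c2)). pose proof (Rle_abs (- h c2)). rewrite Rabs_Ropp in H7.
  fold (P t). apply Rabs_le.
  assert (0 <= (K * c1 ^ p / INR (fact p) - h c1) * (t - 0)) by (apply Rmult_le_pos; lra).
  assert (0 <= (K * c2 ^ p / INR (fact p) + h c2) * (t - 0)) by (apply Rmult_le_pos; lra).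
  rewrite H0, H1 in *. lra.
Qed.

Lemma deriv_bound (H h : R -> R) K p : H 0 = 0 -> K >= 0 ->
  (forall s, derivable_pt_lim H s (h s)) ->
  (forall s, Rabs (h s) <= K * Rabs s ^ p / INR (fact p)) ->
  forall t, Rabs (H t) <= K * Rabs t ^ (S p) / INR (fact (S p)).
Proof.
  intros H0 HK Hd Hb t. destruct (Rle_dec 0 t).
  - rewrite (Rabs_right t) by lra. apply deriv_bound_pos with h; auto.
    intros s Hs. pose proof (Hb s) as Hbs. rewrite (Rabs_right s) in Hbs by lra. exact Hbs.
  - rewrite (Rabs_left t) by lra.
    replace (H t) with (H (- - t)) by (f_equal; ring).
    apply (deriv_bound_pos (fun s => H (- s)) (fun s => - h (- s)) K p); auto.
    + simpl. rewrite Ropp_0; auto.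
    + intros s Hs. replace (- h (- s)) with (h (- s) * (-1)) by ring.
      apply (derivable_pt_lim_comp Ropp H). 
      replace (-1) with (- (1)) by ring. apply derivable_pt_lim_opp. apply derivable_pt_lim_id.
      apply Hd.
    + intros s Hs. rewrite Rabs_Ropp. pose proof (Hb (- s)) as Hbs. rewrite Rabs_Ropp, (Rabs_right s) in Hbs by lra. exact Hbs.
    + lra.
Qed.

Fixpoint picard {n} (G : vec n -> vec n) (x0 : vec n) (m : nat) : R -> vec n :=
  match m with
  | O => fun _ => x0
  | S m' => fun t i => x0 i + RInt (fun s => G (picard G x0 m' s) i) 0 t
  end.

Lemma int_deriv (h : R -> R) : (forall t, continuity_pt h t) ->
  forall t, derivable_pt_lim (fun s => RInt h 0 s) t (h t).
Proof.
  intros Hc t. apply is_derive_Reals. apply (is_derive_RInt h (RInt h 0) 0 t).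
  - apply filter_forall. intros b. apply (@RInt_correct R_CompleteNormedModule). apply (@ex_RInt_continuous R_CompleteNormedModule).
    intros z _. apply continuity_pt_filterlim. auto.
  - apply continuity_pt_filterlim. auto.
Qed.

Lemma picard_deriv {n} (G : vec n -> vec n) L x0 m :
  (forall i z z', Rabs (G z i - G z' i) <= L * norm (vsub z z')) -> L >= 0 ->
  (forall j t, continuity_pt (fun s => picard G x0 m s j) t) ->
  forall i t, derivable_pt_lim (fun s => picard G x0 (S m) s i) t (G (picard G x0 m t) i).
Proof.
  intros HG HL Hc i t. simpl.
  replace (G (picard G x0 m t) i) with (0 + G (picard G x0 m t) i) by ring.
  apply derivable_pt_lim_plus. apply derivable_pt_lim_const.
  apply (int_deriv (fun s => G (picard G x0 m s) i)).
  intros t'. apply (cont_G G L); auto.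
Qed.

Lemma picard_cont {n} (G : vec n -> vec n) L x0 :
  (forall i z z', Rabs (G z i - G z' i) <= L * norm (vsub z z')) -> L >= 0 ->
  forall m j t, continuity_pt (fun s => picard G x0 m s j) t.
Proof.
  intros HG HL m. induction m; intros j t.
  - apply continuity_pt_const. intros a b; reflexivity.
  - apply (derivable_continuous_pt _ _ (exist _ _ (picard_deriv G L x0 m HG HL IHm j t))).
Qed.

Lemma picard_0 {n} (G : vec n -> vec n) x0 m : picard G x0 m 0 = x0.
Proof.
  destruct m; simpl; auto. apply functional_extensionality; intros i. rewrite RInt_point. unfold zero; simpl. ring.
Qed.

Lemma picard_bound {n} (G : vec n -> vec n) L x0 :
  (forall i z z', Rabs (G z i - G z' i) <= L * norm (vsub z z')) -> L >= 0 ->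
  forall m t, norm (vsub (picard G x0 (S m) t) (picard G x0 m t)) <=
    (INR n * norm (G x0)) * (INR n * L) ^ m * Rabs t ^ (S m) / INR (fact (S m)).
Proof.
  intros HG HL. pose proof (pos_INR n) as Hn. pose proof (norm_nonneg (G x0)) as HG0.
  pose proof (picard_cont G L x0 HG HL) as Hc.
  induction m; intros t.
  - replace (INR n * norm (G x0) * (INR n * L) ^ 0 * Rabs t ^ 1 / INR (fact 1))
      with (INR n * (norm (G x0) * Rabs t ^ 1 / INR (fact 1))) by (simpl; field).
    apply norm_bound_comp. apply Rmult_le_pos. apply Rmult_le_pos; auto. apply pow_le, Rabs_pos.
    simpl; lra.
    intros i. unfold vsub.
    apply (deriv_bound (fun t => picard G x0 1 t i - picard G x0 0 t i) (fun _ => G x0 i) (norm (G x0)) 0).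
    + rewrite !picard_0. ring.
    + lra.
    + intros s. replace (G x0 i) with (G (picard G x0 0 s) i - 0) by (simpl; ring).
      apply derivable_pt_lim_minus. apply (picard_deriv G L); auto. apply derivable_pt_lim_const.
    + intros s. simpl. replace (norm (G x0) * 1 / 1) with (norm (G x0)) by field. apply norm_comp.
  - set (K := L * (INR n * norm (G x0) * (INR n * L) ^ m)).
    assert (HK : K >= 0).
    { unfold K. apply Rle_ge. apply Rmult_le_pos. lra. apply Rmult_le_pos. apply Rmult_le_pos; auto.
      apply pow_le. apply Rmult_le_pos; lra. }
    replace (INR n * norm (G x0) * (INR n * L) ^ S m * Rabs t ^ S (S m) / INR (fact (S (S m))))
      with (INR n * (K * Rabs t ^ S (S m) / INR (fact (S (S m))))) by (unfold K; cbn [pow]; field; apply INR_fact_neq_0).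
    apply norm_bound_comp. apply Rmult_le_pos. apply Rmult_le_pos; [lra|apply pow_le, Rabs_pos].
    left; apply Rinv_0_lt_compat, INR_fact_lt_0.
    intros i. unfold vsub.
    apply (deriv_bound (fun t => picard G x0 (S (S m)) t i - picard G x0 (S m) t i)
      (fun s => G (picard G x0 (S m) s) i - G (picard G x0 m s) i) K (S m)).
    + rewrite !picard_0. ring.
    + auto.
    + intros s. apply derivable_pt_lim_minus; apply (picard_deriv G L); auto.
    + intros s. eapply Rle_trans. apply HG. specialize (IHm s).
      replace (K * Rabs s ^ S m / INR (fact (S m))) with
        (L * (INR n * norm (G x0) * (INR n * L) ^ m * Rabs s ^ S m / INR (fact (S m)))) by (unfold K; field; apply INR_fact_neq_0).
      apply Rmult_le_compat_l; lra.
Qed.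

Lemma INR_unbnd r : exists N : nat, r <= INR N.
Proof.
  destruct (archimed r) as [H1 _]. destruct (Z.le_gt_cases 0 (up r)).
  - exists (Z.to_nat (up r)). rewrite INR_IZR_INZ, Z2Nat.id by auto. lra.
  - exists 0%nat. simpl. apply IZR_lt in H. simpl in H. lra.
Qed.


Definition bb A q T m := A * T * (q * T) ^ m / INR (fact m).

Lemma bb_nonneg A q T m : 0 <= A -> 0 <= q -> 0 <= T -> 0 <= bb A q T m.
Proof.
  intros. unfold bb. apply Rmult_le_pos. apply Rmult_le_pos. nra. apply pow_le; nra.
  left; apply Rinv_0_lt_compat, INR_fact_lt_0.
Qed.

Lemma bb_half A q T : 0 <= A -> 0 <= q -> 0 <= T -> exists N0, forall m, (N0 <= m)%nat -> bb A q T (S m) <= bb A q T m / 2.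
Proof.
  intros HA Hq HT. destruct (INR_unbnd (2 * q * T)) as [N0 HN0]. exists N0. intros m Hm.
  unfold bb. rewrite fact_simpl, mult_INR. cbn [pow].
  assert (INR N0 <= INR m) by (apply le_INR; auto).
  assert (0 < INR (S m)) by (apply lt_0_INR; lia). rewrite S_INR in *.
  pose proof (INR_fact_lt_0 m). pose proof (pow_le (q * T) m ltac:(nra)).
  replace (A * T * (q * T * (q * T) ^ m) / ((INR m + 1) * INR (fact m))) with
    ((A * T * (q * T) ^ m / INR (fact m)) * (q * T / (INR m + 1))) by (field; lra).
  assert (0 <= A * T * (q * T) ^ m / INR (fact m)).
  { apply Rmult_le_pos. apply Rmult_le_pos. nra. auto. left; apply Rinv_0_lt_compat; auto. }
  assert (q * T / (INR m + 1) <= / 2).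
  { apply (Rmult_le_reg_r (INR m + 1)). lra. field_simplify; lra. }
  replace (A * T * (q * T) ^ m / INR (fact m) / 2) with ((A * T * (q * T) ^ m / INR (fact m)) * / 2) by (unfold Rdiv; ring).
  apply Rmult_le_compat_l; auto.
Qed.

Lemma bb_cv A q T : Un_cv (bb A q T) 0.
Proof.
  intros eps Heps. destruct (Req_dec (A * T) 0) as [E|E].
  - exists 0%nat. intros m _. unfold bb, Rdist. rewrite E. unfold Rdiv. rewrite !Rmult_0_l, Rminus_0_r, Rabs_R0. lra.
  - assert (Ha : 0 < Rabs (A * T)) by (apply Rabs_pos_lt; auto).
    destruct (cv_speed_pow_fact (q * T) (eps / Rabs (A * T))) as [N HN]. apply Rdiv_lt_0_compat; lra.
    exists N. intros m Hm. specialize (HN m Hm). unfold Rdist in *. rewrite Rminus_0_r in *.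
    unfold bb. replace (A * T * (q * T) ^ m / INR (fact m)) with ((A * T) * ((q * T) ^ m / INR (fact m))) by (unfold Rdiv; ring).
    rewrite Rabs_mult. apply (Rmult_lt_compat_l (Rabs (A * T))) in HN; auto.
    replace (Rabs (A * T) * (eps / Rabs (A * T))) with eps in HN by (field; lra). lra.
Qed.

Lemma step_comp {n} (G : vec n -> vec n) L x0 T m t i :
  (forall i z z', Rabs (G z i - G z' i) <= L * norm (vsub z z')) -> L >= 0 ->
  Rabs t <= T ->
  Rabs (picard G x0 (S m) t i - picard G x0 m t i) <= bb (INR n * norm (G x0)) (INR n * L) T m.
Proof.
  intros HG HL Ht. pose proof (pos_INR n). pose proof (norm_nonneg (G x0)).
  eapply Rle_trans. apply (norm_comp (vsub (picard G x0 (S m) t) (picard G x0 m t)) i).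
  eapply Rle_trans. apply picard_bound; auto.
  unfold bb. rewrite fact_simpl, mult_INR.
  pose proof (INR_fact_lt_0 m). assert (1 <= INR (S m)) by (apply (le_INR 1); lia).
  assert (HA : 0 <= INR n * norm (G x0) * (INR n * L) ^ m) by (apply Rmult_le_pos; [nra|apply pow_le; nra]).
  assert (Rabs t ^ S m <= T ^ S m) by (apply pow_incr; split; auto; apply Rabs_pos).
  assert (0 <= Rabs t ^ S m) by (apply pow_le, Rabs_pos).
  replace (INR n * norm (G x0) * T * (INR n * L * T) ^ m / INR (fact m)) with
    (INR n * norm (G x0) * (INR n * L) ^ m * T ^ S m / INR (fact m)) by (rewrite (Rpow_mult_distr (INR n * L) T); cbn [pow]; unfold Rdiv; ring).
  unfold Rdiv. rewrite Rinv_mult.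
  assert (/ INR (S m) <= 1) by (rewrite <- Rinv_1; apply Rinv_le_contravar; lra).
  assert (0 < / INR (S m)) by (apply Rinv_0_lt_compat; lra).
  assert (0 < / INR (fact m)) by (apply Rinv_0_lt_compat; lra).
  assert (INR n * norm (G x0) * (INR n * L) ^ m * Rabs t ^ S m <= INR n * norm (G x0) * (INR n * L) ^ m * T ^ S m)
    by (apply Rmult_le_compat_l; auto).
  assert (0 <= INR n * norm (G x0) * (INR n * L) ^ m * Rabs t ^ S m) by (apply Rmult_le_pos; auto).
  assert (/ INR (S m) * / INR (fact m) <= / INR (fact m)) by nra.
  apply Rmult_le_compat; nra.
Qed.

Lemma tail_comp {n} (G : vec n -> vec n) L x0 T N0 t i :
  (forall i z z', Rabs (G z i - G z' i) <= L * norm (vsub z z')) -> L >= 0 -> 0 <= T ->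
  (forall m, (N0 <= m)%nat -> bb (INR n * norm (G x0)) (INR n * L) T (S m) <= bb (INR n * norm (G x0)) (INR n * L) T m / 2) ->
  Rabs t <= T ->
  forall k m, (N0 <= m)%nat -> Rabs (picard G x0 (m + k) t i - picard G x0 m t i) <= 2 * bb (INR n * norm (G x0)) (INR n * L) T m.
Proof.
  intros HG HL HT HN Ht k. induction k; intros m Hm.
  - rewrite Nat.add_0_r. replace (picard G x0 m t i - picard G x0 m t i) with 0 by ring. rewrite Rabs_R0.
    pose proof (bb_nonneg (INR n * norm (G x0)) (INR n * L) T m). pose proof (pos_INR n). pose proof (norm_nonneg (G x0)).
    assert (0 <= bb (INR n * norm (G x0)) (INR n * L) T m) by (apply H; nra). lra.
  - replace (m + S k)%nat with (S m + k)%nat by lia.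
    specialize (IHk (S m) ltac:(lia)). pose proof (step_comp G L x0 T m t i HG HL Ht).
    pose proof (HN m Hm).
    replace (picard G x0 (S m + k) t i - picard G x0 m t i) with
      ((picard G x0 (S m + k) t i - picard G x0 (S m) t i) + (picard G x0 (S m) t i - picard G x0 m t i)) by ring.
    eapply Rle_trans. apply Rabs_triang. lra.
Qed.

Definition phinf {n} (G : vec n -> vec n) (x0 : vec n) (t : R) : vec n :=
  fun i => epsilon (inhabits 0) (fun l => Un_cv (fun m => picard G x0 m t i) l).

Lemma phinf_cv {n} (G : vec n -> vec n) L x0 t i :
  (forall i z z', Rabs (G z i - G z' i) <= L * norm (vsub z z')) -> L >= 0 ->
  Un_cv (fun m => picard G x0 m t i) (phinf G x0 t i).
Proof.
  intros HG HL. unfold phinf. apply epsilon_spec.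
  set (A := INR n * norm (G x0)). set (q := INR n * L). set (T := Rabs t).
  assert (HA : 0 <= A) by (unfold A; pose proof (pos_INR n); pose proof (norm_nonneg (G x0)); nra).
  assert (Hq : 0 <= q) by (unfold q; pose proof (pos_INR n); nra).
  assert (HT : 0 <= T) by apply Rabs_pos.
  destruct (bb_half A q T HA Hq HT) as [N0 HN0].
  assert (Hc : Cauchy_crit (fun m => picard G x0 m t i)).
  { intros eps Heps. destruct (bb_cv A q T (eps / 4)) as [N1 HN1]. lra.
    exists (max N0 N1). intros a b Ha Hb. set (N := max N0 N1).
    assert (Hb1 : bb A q T N < eps / 4).
    { specialize (HN1 N ltac:(lia)). unfold Rdist in HN1. rewrite Rminus_0_r in HN1.
      eapply Rle_lt_trans; [apply Rle_abs|exact HN1]. }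
    pose proof (tail_comp G L x0 T N0 t i HG HL HT HN0 (Rle_refl _) (a - N) N ltac:(lia)).
    pose proof (tail_comp G L x0 T N0 t i HG HL HT HN0 (Rle_refl _) (b - N) N ltac:(lia)).
    replace (N + (a - N))%nat with a in H by lia. replace (N + (b - N))%nat with b in H0 by lia.
    fold A q in H, H0. unfold Rdist.
    replace (picard G x0 a t i - picard G x0 b t i) with
      ((picard G x0 a t i - picard G x0 N t i) - (picard G x0 b t i - picard G x0 N t i)) by ring.
    eapply Rle_lt_trans. apply Rabs_triang. rewrite Rabs_Ropp. lra. }
  destruct (Rcomplete.R_complete _ Hc) as [l Hl]. eauto.
Qed.

Lemma phinf_unif {n} (G : vec n -> vec n) L x0 T N0 t i m :
  (forall i z z', Rabs (G z i - G z' i) <= L * norm (vsub z z')) -> L >= 0 -> 0 <= T ->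
  (forall m, (N0 <= m)%nat -> bb (INR n * norm (G x0)) (INR n * L) T (S m) <= bb (INR n * norm (G x0)) (INR n * L) T m / 2) ->
  Rabs t <= T -> (N0 <= m)%nat ->
  Rabs (phinf G x0 t i - picard G x0 m t i) <= 2 * bb (INR n * norm (G x0)) (INR n * L) T m.
Proof.
  intros HG HL HT HN Ht Hm. apply Rnot_lt_le. intros Hlt.
  set (e := Rabs (phinf G x0 t i - picard G x0 m t i) - 2 * bb (INR n * norm (G x0)) (INR n * L) T m).
  destruct (phinf_cv G L x0 t i HG HL e ltac:(unfold e; lra)) as [K HK].
  specialize (HK (max K m) ltac:(lia)). unfold Rdist in HK.
  pose proof (tail_comp G L x0 T N0 t i HG HL HT HN Ht (max K m - m) m Hm).
  replace (m + (max K m - m))%nat with (max K m) in H by lia.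
  replace (phinf G x0 t i - picard G x0 m t i) with
    (- (picard G x0 (max K m) t i - phinf G x0 t i) + (picard G x0 (max K m) t i - picard G x0 m t i)) in e by ring.
  assert (Rabs (phinf G x0 t i - picard G x0 m t i) <= Rabs (picard G x0 (max K m) t i - phinf G x0 t i) + Rabs (picard G x0 (max K m) t i - picard G x0 m t i)).
  { replace (phinf G x0 t i - picard G x0 m t i) with
    (- (picard G x0 (max K m) t i - phinf G x0 t i) + (picard G x0 (max K m) t i - picard G x0 m t i)) by ring.
    eapply Rle_trans. apply Rabs_triang. rewrite Rabs_Ropp. lra. }
  unfold e in HK. lra.
Qed.

Lemma phinf_0 {n} (G : vec n -> vec n) L x0 :
  (forall i z z', Rabs (G z i - G z' i) <= L * norm (vsub z z')) -> L >= 0 ->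
  phinf G x0 0 = x0.
Proof.
  intros HG HL. apply functional_extensionality; intros i.
  apply (UL_sequence (fun m => picard G x0 m 0 i)). apply phinf_cv with L; auto.
  intros eps Heps. exists 0%nat. intros m _. rewrite picard_0. unfold Rdist. replace (x0 i - x0 i) with 0 by ring.
  rewrite Rabs_R0. lra.
Qed.

Lemma phinf_deriv {n} (G : vec n -> vec n) L x0 :
  (forall i z z', Rabs (G z i - G z' i) <= L * norm (vsub z z')) -> L >= 0 ->
  forall t i, derivable_pt_lim (fun s => phinf G x0 s i) t (G (phinf G x0 t) i).
Proof.
  intros HG HL t i.
  set (A := INR n * norm (G x0)). set (q := INR n * L). set (T := Rabs t + 1).
  assert (HA : 0 <= A) by (unfold A; pose proof (pos_INR n); pose proof (norm_nonneg (G x0)); nra).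
  assert (Hq : 0 <= q) by (unfold q; pose proof (pos_INR n); nra).
  assert (HT : 0 < T) by (unfold T; pose proof (Rabs_pos t); lra).
  destruct (bb_half A q T HA Hq ltac:(lra)) as [N0 HN0].
  pose proof (picard_cont G L x0 HG HL) as Hc.
  assert (HCVU : CVU (fun k y => G (picard G x0 k y) i) (fun y => G (phinf G x0 y) i) 0 (mkposreal T HT)).
    { intros eps Heps. set (M := 2 * L * INR n).
      assert (HM : 0 <= M) by (unfold M; pose proof (pos_INR n); nra).
      destruct (bb_cv A q T (eps / (M + 1))) as [N1 HN1]. apply Rdiv_lt_0_compat; lra.
      exists (max N0 N1). intros k y Hk Hy. unfold Boule in Hy; simpl in Hy. rewrite Rminus_0_r in Hy.
      specialize (HN1 k ltac:(lia)). unfold Rdist in HN1. rewrite Rminus_0_r in HN1.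
      assert (Hbk : 0 <= bb A q T k) by (apply bb_nonneg; lra).
      rewrite Rabs_right in HN1 by lra.
      eapply Rle_lt_trans. apply HG.
      assert (norm (vsub (phinf G x0 y) (picard G x0 k y)) <= INR n * (2 * bb A q T k)).
      { apply norm_bound_comp. lra. intros j. unfold vsub. apply (phinf_unif G L x0 T N0); auto; try lra; lia. }
      assert (M * bb A q T k < eps).
      { apply (Rmult_lt_compat_l (M + 1)) in HN1; [|lra]. replace ((M + 1) * (eps / (M + 1))) with eps in HN1 by (field; lra).
        nra. }
      unfold M in H0. pose proof (pos_INR n). nra. }
  apply (derivable_pt_lim_CVU (fun k y => picard G x0 (S k) y i) (fun k y => G (picard G x0 k y) i)
     (fun y => phinf G x0 y i) (fun y => G (phinf G x0 y) i) t 0 (mkposreal T HT)).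
  - unfold Boule. simpl. rewrite Rminus_0_r. unfold T; lra.
  - intros y k _. apply (picard_deriv G L); auto.
  - intros y _ eps Heps. destruct (phinf_cv G L x0 y i HG HL eps Heps) as [N HN].
    exists N. intros k Hk. apply HN. lia.
  - exact HCVU.
  - apply CVU_continuity with (fun k y => G (picard G x0 k y) i).
    + exact HCVU.
    + intros k y _. apply (cont_G G L); auto.
Qed.

Lemma vec_cont {n} (phi : R -> vec n) t : (forall j, continuity_pt (fun s => phi s j) t) ->
  forall eps, eps > 0 -> exists d, d > 0 /\ forall s, Rabs (s - t) < d -> norm (vsub (phi s) (phi t)) < eps.
Proof.
  intros Hc eps Heps. set (e := eps / (INR n + 1)).
  assert (He : e > 0) by (unfold e; apply Rdiv_lt_0_compat; pose proof (pos_INR n); lra).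
  destruct (fin_min n (fun j d => forall s, Rabs (s - t) < d -> Rabs (phi s j - phi t j) < e)) as [d [Hd H]].
  - intros j d d' Hd' H s Hs. apply H. lra.
  - intros j. apply (cont_pt_elim _ _ (Hc j) e He).
  - exists d. split; auto. intros s Hs.
    eapply Rle_lt_trans. apply (norm_bound_comp _ e). lra. intros j. left. apply H; auto.
    unfold e. apply (Rmult_lt_reg_r (INR n + 1)). pose proof (pos_INR n); lra.
    field_simplify. pose proof (pos_INR n); nra. pose proof (pos_INR n); lra.
Qed.

Lemma existence {n} U X V c x0 : @Hyp n U X V c -> U x0 -> V x0 < c ->
  exists y, is_solution U (FF X V) x0 y.
Proof.
  intros H Hx0 Hc0.
  destruct (F_lip _ _ _ _ H) as [L [HL Hlip]].
  destruct (F_bound _ _ _ _ H) as [B [HB0 HB]].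
  set (K := KK U V c).
  assert (Kx0 : K x0) by (split; auto; split; [apply (hV0 _ _ _ _ H); auto|lra]).
  set (Gc := fun z i => mcs K (fun y => FF X V y i) L z).
  assert (HBi : forall i y, K y -> - B <= FF X V y i).
  { intros i y Hy. pose proof (HB y Hy). pose proof (norm_comp (FF X V y) i).
    pose proof (Rle_abs (- FF X V y i)). rewrite Rabs_Ropp in H2. lra. }
  assert (HG : forall i z z', Rabs (Gc z i - Gc z' i) <= L * norm (vsub z z')).
  { intros i z z'. apply (mcs_lip K _ L B x0); auto. }
  assert (HGF : forall z, K z -> Gc z = FF X V z).
  { intros z Hz. apply functional_extensionality; intros i. unfold Gc.
    apply (mcs_eq K (fun y => FF X V y i) L B x0); auto.
    intros y z' Hy Hz'. eapply Rle_trans. apply (norm_comp (vsub (FF X V z') (FF X V y)) i). apply Hlip; auto. }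
  set (phi := phinf Gc x0).
  assert (Hp0 : phi 0 = x0) by (apply (phinf_0 Gc L); auto).
  assert (Hpd : forall t i, derivable_pt_lim (fun s => phi s i) t (Gc (phi t) i)) by (apply (phinf_deriv Gc L); auto).
  assert (Hpc : forall t j, continuity_pt (fun s => phi s j) t).
  { intros t j. apply (derivable_continuous_pt _ _ (exist _ _ (Hpd t j))). }
  assert (Vdec : forall b, (forall s, 0 <= s <= b -> K (phi s)) -> forall s, 0 <= s <= b -> V (phi s) <= V x0).
  { intros b Hb s Hs. destruct (Req_dec s 0) as [->|Hs0]. rewrite Hp0; lra.
    destruct (MVT_cor2 (fun s => V (phi s)) (fun s => - sumsq (grad V (phi s))) 0 s) as [r [E Hr]]. lra.
    { intros r Hr. apply (sol_V_deriv U X V c); auto. apply (Hb r). lra.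
      intros i. rewrite <- (HGF (phi r)). apply Hpd. apply Hb; lra. }
    rewrite Hp0 in E. pose proof (sumsq_nonneg (grad V (phi r))). nra. }
  set (Good := fun t => 0 <= t /\ forall s, 0 <= s <= t -> K (phi s)).
  assert (Hall : forall t, 0 <= t -> K (phi t)).
  { apply NNPP. intros Hn. apply not_all_ex_not in Hn. destruct Hn as [tb Htb].
    apply imply_to_and in Htb. destruct Htb as [Htb0 Htb].
    assert (Hbnd : bound Good).
    { exists tb. intros t [Ht0 Ht]. apply Rnot_lt_le. intros Hlt. apply Htb. apply Ht. lra. }
    destruct (completeness Good Hbnd) as [ts [Hub Hlub]].
    { exists 0. split. lra. intros s Hs. replace s with 0 by lra. rewrite Hp0; auto. }
    assert (Hts0 : 0 <= ts) by (apply Hub; split; [lra|]; intros s Hs; replace s with 0 by lra; rewrite Hp0; auto).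
    assert (Hbelow : forall s, 0 <= s < ts -> K (phi s)).
    { intros s Hs. apply NNPP. intros Hn. assert (is_upper_bound Good s).
      { intros t [Ht0 Ht]. apply Rnot_lt_le. intros Hlt. apply Hn. apply Ht. lra. }
      specialize (Hlub s H0). lra. }
    assert (Kts : K (phi ts)).
    { apply NNPP. intros Hn. destruct (compact_sep K (phi ts) (hK _ _ _ _ H) Hn) as [r [Hr Hsep]].
      destruct (Req_dec ts 0) as [E|E]. rewrite E, Hp0 in Hn. auto.
      destruct (vec_cont phi ts (Hpc ts) r Hr) as [d [Hd Hdd]].
      set (s := ts - Rmin d ts / 2).
      assert (0 < Rmin d ts) by (apply Rmin_glb_lt; lra).
      pose proof (Rmin_l d ts). pose proof (Rmin_r d ts).
      specialize (Hsep (phi s) (Hbelow s ltac:(unfold s; lra))).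
      specialize (Hdd s ltac:(unfold s; rewrite Rabs_left by lra; lra)). lra. }
    assert (Gts : forall s, 0 <= s <= ts -> K (phi s)).
    { intros s Hs. destruct (Req_dec s ts) as [->|]; auto. apply Hbelow; lra. }
    assert (Vts : V (phi ts) <= V x0) by (apply (Vdec ts Gts); lra).
    destruct Kts as [Uts _].
    destruct (hU _ _ _ _ H _ Uts) as [r [Hr Hbr]].
    destruct (Hyp_V_cont _ _ _ _ H (phi ts) Uts (c - V x0)) as [d1 [Hd1 Hd1']]. lra.
    destruct (vec_cont phi ts (Hpc ts) (Rmin r d1) ltac:(apply Rmin_glb_lt; lra)) as [d [Hd Hdd]].
    assert (Gext : forall s, 0 <= s <= ts + d / 2 -> K (phi s)).
    { intros s Hs. destruct (Rle_dec s ts). apply Gts; lra.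
      assert (Hn : norm (vsub (phi s) (phi ts)) < Rmin r d1) by (apply Hdd; rewrite Rabs_right; lra).
      pose proof (Rmin_l r d1). pose proof (Rmin_r r d1).
      assert (Us : U (phi s)) by (apply Hbr; lra).
      split; auto. split. apply (hV0 _ _ _ _ H); auto.
      specialize (Hd1' (phi s) Us ltac:(lra)). apply Rabs_def2 in Hd1'. lra. }
    assert (Gd : Good (ts + d / 2)) by (split; [lra|exact Gext]). specialize (Hub _ Gd). lra. }
  exists phi. split; auto. intros t Ht. split. apply (Hall t Ht).
  intros i. rewrite <- (HGF (phi t)). apply Hpd. apply Hall; auto.
Qed.

Lemma Ck_ext {n} (U : vec n -> Prop) k : is_open U -> forall f g,
  (forall y, U y -> f y = g y) -> Ck k U f -> Ck k U g.
Proof.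
  intros HU. induction k; intros f g E Hf; simpl in *.
  - eapply continuous_on_ext; eauto.
  - destruct Hf as [Hc [D [H1 H2]]]. split. eapply continuous_on_ext; eauto.
    exists D. split; auto. intros i x Hx. eapply has_partial_local; eauto.
Qed.

Lemma Ck_cont {n} (U : vec n -> Prop) k f : Ck k U f -> continuous_on U f.
Proof. destruct k; simpl; tauto. Qed.

Lemma Ck_mono {n} (U : vec n -> Prop) k : forall f, Ck (S k) U f -> Ck k U f.
Proof.
  induction k; intros f Hf.
  - apply (Ck_cont U 1); auto.
  - destruct Hf as [Hc [D [H1 H2]]]. split; auto. exists D. split; auto.
Qed.

Lemma Ck_const {n} (U : vec n -> Prop) k a : Ck k U (fun _ => a).
Proof.
  revert a. induction k; intros a; simpl. apply continuous_on_const.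
  split. apply continuous_on_const. exists (fun _ _ => 0). split; auto.
  intros i x Hx. apply derivable_pt_lim_const.
Qed.

Lemma Ck_plus {n} (U : vec n -> Prop) k : forall f g, Ck k U f -> Ck k U g -> Ck k U (fun x => f x + g x).
Proof.
  induction k; intros f g Hf Hg; simpl in *.
  - apply continuous_on_plus; auto.
  - destruct Hf as [Hfc [Df [Hf1 Hf2]]]. destruct Hg as [Hgc [Dg [Hg1 Hg2]]].
    split. apply continuous_on_plus; auto.
    exists (fun i x => Df i x + Dg i x). split.
    + intros i x Hx. apply (derivable_pt_lim_plus (fun h => f (upd x i h)) (fun h => g (upd x i h))); auto.
      apply Hf1; auto. apply Hg1; auto.
    + intros i. apply IHk; auto.
Qed.

Lemma Ck_mult {n} (U : vec n -> Prop) k : forall f g, Ck k U f -> Ck k U g -> Ck k U (fun x => f x * g x).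
Proof.
  induction k; intros f g Hf Hg.
  - simpl in *. apply continuous_on_mult; auto.
  - pose proof (Ck_mono U k f Hf) as Hfk. pose proof (Ck_mono U k g Hg) as Hgk.
    destruct Hf as [Hfc [Df [Hf1 Hf2]]]. destruct Hg as [Hgc [Dg [Hg1 Hg2]]].
    split. apply continuous_on_mult; auto.
    exists (fun i x => Df i x * g x + f x * Dg i x). split.
    + intros i x Hx. unfold has_partial.
      pose proof (derivable_pt_lim_mult (fun h => f (upd x i h)) (fun h => g (upd x i h)) 0 _ _ (Hf1 i x Hx) (Hg1 i x Hx)) as Hm.
      cbv beta in Hm. rewrite upd_0 in Hm. unfold mult_fct in Hm. exact Hm.
    + intros i. apply Ck_plus; apply IHk; auto.
Qed.

Lemma Ck_fsum {n} (U : vec n -> Prop) k m (f : Fin.t m -> vec n -> R) :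
  (forall i, Ck k U (f i)) -> Ck k U (fun x => fsum m (fun i => f i x)).
Proof.
  revert f; induction m; intros f H; simpl. apply Ck_const.
  apply Ck_plus; auto.
Qed.

Lemma Cinf_pderiv {n} (U : vec n -> Prop) f i : is_open U -> Cinf U f -> Cinf U (fun x => pderiv f i x).
Proof.
  intros HU Hf k. destruct (Hf (S k)) as [_ [D [H1 H2]]].
  apply (Ck_ext U k HU (D i)). intros y Hy. symmetry. apply pderiv_eq. auto. apply H2.
Qed.

Lemma Cinf_lie {n} (U : vec n -> Prop) X g : is_open U -> Cinf_field U X -> Cinf U g ->
  forall k, Cinf U (lie X k g).
Proof.
  intros HU HX Hg k. induction k; simpl; auto.
  intros m. unfold dot. apply (Ck_fsum U m n (fun i x => X x i * grad (lie X k g) x i)).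
  intros i. apply Ck_mult. apply HX. unfold grad. apply (Cinf_pderiv U (lie X k g) i HU IHk).
Qed.

Lemma deriv_locally_const (f : R -> R) t d : d > 0 -> (forall s, Rabs (s - t) < d -> f s = f t) ->
  derivable_pt_lim f t 0.
Proof.
  intros Hd H eps Heps. exists (mkposreal d Hd). simpl. intros h Hh Hhd.
  rewrite H. replace (f t - f t) with 0 by ring. unfold Rdiv. rewrite Rmult_0_l, Rminus_0_r, Rabs_R0. lra.
  replace (t + h - t) with h by ring. auto.
Qed.

Lemma sumsq_zero {n} (x : vec n) : sumsq x = 0 -> forall i, x i = 0.
Proof.
  intros H i. pose proof (fsum_ge_term n (fun i => x i ^ 2) i (fun j => pow2_ge_0 (x j))).
  fold (sumsq x) in H0. rewrite H in H0. pose proof (pow2_ge_0 (x i)). nra.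
Qed.

Lemma const_grad {n} U X V c p (y : R -> vec n) : @Hyp n U X V c ->
  is_solution U (FF X V) p y -> V (y 1) = V p ->
  (forall s, 0 <= s <= 1 -> V (y s) = V p) /\ forall t, 0 < t < 1 -> forall i, grad V (y t) i = 0.
Proof.
  intros H Hs E.
  assert (Hc : forall s, 0 <= s <= 1 -> V (y s) = V p).
  { intros s Hs'. pose proof (sol_V_noninc _ _ _ _ _ _ H Hs 0 s ltac:(lra)).
    pose proof (sol_V_noninc _ _ _ _ _ _ H Hs s 1 ltac:(lra)).
    destruct Hs as [E0 _]. rewrite E0 in H0. lra. }
  split; auto. intros t Ht i.
  assert (D1 : derivable_pt_lim (fun s => V (y s)) t 0).
  { apply (deriv_locally_const _ t (Rmin t (1 - t))). apply Rmin_glb_lt; lra.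
    intros s Hst. pose proof (Rmin_l t (1 - t)). pose proof (Rmin_r t (1 - t)).
    apply Rabs_def2 in Hst. rewrite !Hc; lra. }
  destruct (proj2 Hs t ltac:(lra)) as [Hu Hd].
  pose proof (sol_V_deriv U X V c y t H Hu Hd) as D2.
  pose proof (uniqueness_limite _ _ _ _ D1 D2).
  apply sumsq_zero. lra.
Qed.

Lemma lie_zero {n} U X V c p (y : R -> vec n) : @Hyp n U X V c -> Cinf_field U X -> Cinf U V ->
  is_solution U (FF X V) p y -> (forall t, 0 < t < 1 -> forall i, grad V (y t) i = 0) ->
  forall k i t, 0 < t < 1 -> lie X k (fun z => grad V z i) (y t) = 0.
Proof.
  intros H HX HV Hs Hg k i. induction k; intros t Ht.
  - simpl. auto.
  - set (g := lie X k (fun z => grad V z i)).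
    assert (Cg : Cinf U g).
    { apply (Cinf_lie U X); auto. apply (hU _ _ _ _ H). unfold grad. apply Cinf_pderiv; auto. apply (hU _ _ _ _ H). }
    destruct (Cg 1%nat) as [_ [D [HD1 HD2]]].
    destruct (proj2 Hs t ltac:(lra)) as [Hu Hd].
    assert (D1 : derivable_pt_lim (fun s => g (y s)) t 0).
    { apply (deriv_locally_const _ t (Rmin t (1 - t))). apply Rmin_glb_lt; lra.
      intros s Hst. pose proof (Rmin_l t (1 - t)). pose proof (Rmin_r t (1 - t)).
      apply Rabs_def2 in Hst. unfold g. rewrite !IHk; lra. }
    assert (D2 := chain U g D y (fun j => FF X V (y t) j) t (hU _ _ _ _ H) HD1 HD2 Hu Hd).
    pose proof (uniqueness_limite _ _ _ _ D1 D2).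
    simpl. fold g. rewrite H0. unfold dot. apply fsum_ext. intros j.
    unfold FF, vsub. rewrite Hg by auto. unfold grad. rewrite (pderiv_eq g j (y t) (D j (y t))) by auto. ring.
Qed.

Definition A3d {n} (U : vec n -> Prop) X V c : Prop :=
  (forall x, U x -> 0 <= V x <= c -> ((forall i, grad V x i = 0) <-> V x = 0))
   \/
  (Cinf_field U X /\ Cinf U V /\
    forall x, U x -> (forall k i, lie X k (fun y => grad V y i) x = 0) -> 0 <= V x <= c -> V x = 0).

Lemma KL {n} U X V c p : @Hyp n U X V c -> A3d U X V c -> U p -> 0 < V p <= c / 2 ->
  exists r m, r > 0 /\ m > 0 /\ forall x0 y, norm (vsub x0 p) < r -> V x0 <= c / 2 ->
    is_solution U (FF X V) x0 y -> V (y 1) <= V x0 - m.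
Proof.
  intros H HA Hp Hvp. pose proof (hc _ _ _ _ H) as Hc.
  destruct (existence U X V c p H Hp ltac:(lra)) as [yi Hyi].
  assert (Hd0 : V (yi 1) <= V p).
  { pose proof (sol_V_noninc _ _ _ _ _ _ H Hyi 0 1 ltac:(lra)). destruct Hyi as [E _]. rewrite E in H0. auto. }
  assert (Hd : V (yi 1) < V p).
  { destruct (Rle_lt_or_eq_dec _ _ Hd0) as [|E]; auto. exfalso.
    destruct (const_grad _ _ _ _ _ _ H Hyi E) as [Hcst Hg].
    set (q := yi (1 / 2)).
    assert (Hq : U q) by (apply (proj2 Hyi (1/2) ltac:(lra))).
    assert (Vq : V q = V p) by (apply Hcst; lra).
    destruct HA as [A3|[HX [HV A3']]].
    - assert (V q = 0). { apply A3; auto. split; [apply (hV0 _ _ _ _ H); auto|lra]. apply Hg. lra. }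
      lra.
    - assert (V q = 0). { apply A3'; auto. intros k i. apply (lie_zero U X V c p yi); auto. lra.
        split; [apply (hV0 _ _ _ _ H); auto|lra]. }
      lra. }
  set (d := V p - V (yi 1)).
  destruct (F_lip _ _ _ _ H) as [L [HL Hlip]].
  set (E := exp ((1 + L ^ 2) * 1)).
  assert (HE : 0 < E) by apply exp_pos.
  destruct (Hyp_V_cont _ _ _ _ H p Hp (d / 4)) as [d1 [Hd1 H1]]. unfold d; lra.
  assert (Hy1 : U (yi 1)) by (apply (proj2 Hyi 1 ltac:(lra))).
  destruct (Hyp_V_cont _ _ _ _ H (yi 1) Hy1 (d / 4)) as [d2 [Hd2 H2]]. unfold d; lra.
  exists (Rmin d1 (d2 / (E + 1))), (d / 2). split. apply Rmin_glb_lt; auto. apply Rdiv_lt_0_compat; lra.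
  split. unfold d; lra.
  intros x0 y Hx0 Hvx0 Hy.
  assert (Ux0 : U x0) by (destruct Hy as [E0 Hy']; rewrite <- E0; apply (Hy' 0 ltac:(lra))).
  pose proof (Rmin_l d1 (d2 / (E + 1))). pose proof (Rmin_r d1 (d2 / (E + 1))).
  pose proof (gronwall U X V c L x0 p y yi H HL Hlip Hy Hyi ltac:(lra) ltac:(lra) 1 ltac:(lra)) as G.
  fold E in G.
  assert (Hn : norm (vsub (y 1) (yi 1)) < d2).
  { apply norm_lt_sq. lra. eapply Rle_lt_trans. exact G.
    rewrite <- norm_sq. pose proof (norm_nonneg (vsub x0 p)).
    assert (norm (vsub x0 p) < d2 / (E + 1)) by lra.
    assert (norm (vsub x0 p) ^ 2 <= (d2 / (E + 1)) ^ 2) by (apply pow_incr; lra).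
    assert ((d2 / (E + 1)) ^ 2 * E < d2 ^ 2).
    { replace ((d2 / (E + 1)) ^ 2 * E) with (d2 ^ 2 * (E / (E + 1) ^ 2)) by (field; lra).
      assert (E / (E + 1) ^ 2 < 1). { apply (Rmult_lt_reg_r ((E + 1) ^ 2)). nra. field_simplify; nra. }
      assert (0 < d2 ^ 2) by nra. nra. }
    nra. }
  assert (Uy1 : U (y 1)) by (apply (proj2 Hy 1 ltac:(lra))).
  specialize (H2 (y 1) Uy1 Hn). specialize (H1 x0 Ux0 ltac:(lra)).
  apply Rabs_def2 in H1. apply Rabs_def2 in H2. unfold d in *. lra.
Qed.

Lemma V_side {n} U X V c x : @Hyp n U X V c -> U x -> forall (Q : R -> Prop), (forall v, Q v -> exists e, e > 0 /\ forall w, Rabs (w - v) < e -> Q w) -> Q (V x) ->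
  exists r, r > 0 /\ forall y, norm (vsub y x) < r -> U y /\ Q (V y).
Proof.
  intros H Hx Q HQ Qx. destruct (HQ _ Qx) as [e [He He']].
  destruct (hU _ _ _ _ H x Hx) as [r0 [Hr0 Hb]].
  destruct (Hyp_V_cont _ _ _ _ H x Hx e He) as [d [Hd Hd']].
  exists (Rmin r0 d). split. apply Rmin_glb_lt; auto.
  intros y Hy. pose proof (Rmin_l r0 d). pose proof (Rmin_r r0 d).
  assert (U y) by (apply Hb; lra). split; auto. apply He'. apply Hd'; auto. lra.
Qed.

Lemma Lam_compact {n} U X V c : @Hyp n U X V c -> is_compact (fun x => U x /\ V x = 0).
Proof.
  intros H. apply (compact_ext (fun x => KK U V c x /\ (U x /\ V x <= 0))).
  { intros x. unfold KK. pose proof (hc _ _ _ _ H). split.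
    - intros [[Hu _] [_ Hv]]. split; auto. pose proof (hV0 _ _ _ _ H x Hu). lra.
    - intros [Hu Hv]. split; split; auto; lra. }
  apply compact_sub. apply (hK _ _ _ _ H).
  intros x [Hx _] Hn. assert (0 < V x) by (pose proof (hV0 _ _ _ _ H x Hx); apply Rnot_le_lt; intro Hle; apply Hn; split; auto).
  destruct (V_side U X V c x H Hx (fun v => 0 < v)) as [r [Hr Hr']]; auto.
  { intros v Hv. exists v. split; auto. intros w Hw. apply Rabs_def2 in Hw. lra. }
  exists r. split; auto. intros y Hy [_ Hy2]. destruct (Hr' y Hy). lra.
Qed.

Lemma nbhd_small {n} U X V c beta : @Hyp n U X V c -> beta > 0 ->
  exists d, d > 0 /\ forall x0, nbhd (fun x => U x /\ V x = 0) d x0 -> U x0 /\ V x0 < beta.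
Proof.
  intros H Hb.
  destruct (LN _ (fun _ y => U y /\ V y < beta) (Lam_compact _ _ _ _ H)) as (d & m & Hd & Hm & HL).
  - auto.
  - intros a [Ha Va]. destruct (V_side U X V c a H Ha (fun v => v < beta)) as [r [Hr Hr']].
    { intros v Hv. exists (beta - v). split. lra. intros w Hw. apply Rabs_def2 in Hw. lra. }
    lra. exists r, 1. split; auto. split. lra. auto.
  - exists d. split; auto. intros x0 [a [Ha Hxa]]. apply (HL a x0 Ha Hxa).
Qed.

Lemma eta_lemma {n} U X V c eps : @Hyp n U X V c -> eps > 0 ->
  exists eta, eta > 0 /\ forall x, KK U V c x -> V x < eta -> nbhd (fun x => U x /\ V x = 0) eps x.
Proof.
  intros H He.
  set (Lam := fun x => U x /\ V x = 0).
  set (C := fun x => KK U V c x /\ ~ nbhd Lam eps x).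
  assert (HC : is_compact C).
  { apply compact_sub. apply (hK _ _ _ _ H). intros x _ Hn. apply NNPP in Hn.
    destruct Hn as [a [Ha Hxa]]. exists (eps - norm (vsub x a)). split. lra.
    intros y Hy Hn. apply Hn. exists a. split; auto. pose proof (norm_triang y x a). lra. }
  destruct (LN C (fun m y => U y -> m <= V y) HC) as (d & m & Hd & Hm & HL).
  - intros m m' y Hm' Hy Uy. specialize (Hy Uy). lra.
  - intros x [[Hx Hvx] Hn]. assert (0 < V x).
    { destruct (Req_dec (V x) 0) as [E|]. exfalso; apply Hn. exists x. split. split; auto. rewrite norm_sub_refl; lra. lra. }
    destruct (V_side U X V c x H Hx (fun v => V x / 2 < v)) as [r [Hr Hr']]. 
    { intros v Hv. exists (v - V x / 2). split. lra. intros w Hw. apply Rabs_def2 in Hw. lra. }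
    lra. exists r, (V x / 2). split; auto. split. lra. intros y Hy _. destruct (Hr' y Hy). lra.
  - exists m. split; auto. intros x Hx Hv. apply NNPP. intros Hn.
    assert (C x) by (split; auto). specialize (HL x x H0 ltac:(rewrite norm_sub_refl; lra)).
    destruct Hx as [Ux _]. specialize (HL Ux). lra.
Qed.

Lemma T_lemma {n} U X V c eta : @Hyp n U X V c -> A3d U X V c -> eta > 0 ->
  exists N : nat, forall x0 y, V x0 <= c / 2 -> is_solution U (FF X V) x0 y -> V (y (INR N)) < eta.
Proof.
  intros H HA Heta. pose proof (hc _ _ _ _ H) as Hc.
  set (C := fun x => KK U V c x /\ (U x /\ eta <= V x <= c / 2)).
  assert (HC : is_compact C).
  { apply compact_sub. apply (hK _ _ _ _ H). intros x [Hx _] Hn.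
    destruct (Rlt_le_dec (V x) eta) as [Hlt|Hge].
    - destruct (V_side U X V c x H Hx (fun v => v < eta)) as [r [Hr Hr']]; auto.
      { intros v Hv. exists (eta - v). split. lra. intros w Hw. apply Rabs_def2 in Hw. lra. }
      exists r. split; auto. intros y Hy [_ Hy2]. destruct (Hr' y Hy). lra.
    - assert (c / 2 < V x) by (apply Rnot_le_lt; intro Hle; apply Hn; split; auto; lra).
      destruct (V_side U X V c x H Hx (fun v => c / 2 < v)) as [r [Hr Hr']]; auto.
      { intros v Hv. exists (v - c / 2). split. lra. intros w Hw. apply Rabs_def2 in Hw. lra. }
      exists r. split; auto. intros y Hy [_ Hy2]. destruct (Hr' y Hy). lra. }
  destruct (LN C (fun m q => forall x0 y, norm (vsub x0 q) < m -> V x0 <= c / 2 ->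
      is_solution U (FF X V) x0 y -> V (y 1) <= V x0 - m) HC) as (d & m & Hd & Hm & HL).
  - intros m m' q Hm' Hq x0 y Hx0 Hv Hy. specialize (Hq x0 y ltac:(lra) Hv Hy). lra.
  - intros p [_ [Hp Hvp]]. destruct (KL U X V c p H HA Hp ltac:(lra)) as (r & mu & Hr & Hmu & HK).
    exists (r / 2), (Rmin (r / 2) mu). split. lra. split. apply Rmin_glb_lt; lra.
    intros q Hq x0 y Hx0 Hv Hy. pose proof (Rmin_l (r / 2) mu). pose proof (Rmin_r (r / 2) mu).
    specialize (HK x0 y ltac:(pose proof (norm_triang x0 q p); lra) Hv Hy). lra.
  - assert (Hstep : forall q y, C q -> is_solution U (FF X V) q y -> V (y 1) <= V q - m).
    { intros q y Hq Hy. apply (HL q q Hq ltac:(rewrite norm_sub_refl; lra)); auto.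
      rewrite norm_sub_refl; lra. destruct Hq as [_ [_ Hq]]. lra. }
    destruct (INR_unbnd (c / (2 * m) + 1)) as [N HN]. exists N.
    intros x0 y Hx0 Hy.
    assert (Hind : forall k : nat, V (y (INR k)) < eta \/ V (y (INR k)) <= V x0 - INR k * m).
    { induction k.
      - right. destruct Hy as [E _]. simpl. rewrite E. lra.
      - pose proof (sol_shift _ _ _ _ (INR k) Hy (pos_INR k)) as Hs.
        pose proof (sol_V_noninc _ _ _ _ _ _ H Hy (INR k) (INR (S k)) ltac:(split; [apply pos_INR|rewrite S_INR; lra])).
        destruct IHk as [IH|IH]. left. lra.
        destruct (Rlt_le_dec (V (y (INR k))) eta). left; lra.
        right. destruct (sol_in_K _ _ _ _ _ _ H Hy ltac:(lra) (INR k) (pos_INR k)) as [Kk Vk].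
        specialize (Hstep (y (INR k)) _ ltac:(split; auto; destruct Kk as [Uk _]; split; auto; lra) Hs).
        rewrite S_INR. replace (INR k + 1) with (INR k + 1) by ring. lra. }
    destruct (Hind N) as [|Hb]; auto.
    destruct (sol_in_K _ _ _ _ _ _ H Hy ltac:(lra) (INR N) (pos_INR N)) as [[_ [HV0 _]] _].
    exfalso. assert (INR N * m > c / 2).
    { assert (c / (2 * m) * m = c / 2) by (field; lra).
      assert (INR N * m >= (c / (2 * m) + 1) * m) by (apply Rle_ge, Rmult_le_compat_r; lra). nra. }
    lra.
Qed.

Theorem lemma8 (n : nat) (U : vec n -> Prop) (X : vec n -> vec n)
    (V : vec n -> R) (c : R) :
  is_open U ->
  Ck_field 1 U X ->
  Ck 2 U V ->
  (* A1 *)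
  (forall x, U x -> 0 <= V x) ->
  (exists x, U x /\ V x = 0) ->
  (forall x, U x -> dot (grad V x) (X x) = 0) ->
  (* A2 *)
  c > 0 ->
  is_compact (fun x => U x /\ 0 <= V x <= c) ->
  (* A3, or A3' with X and V smooth *)
  ((forall x, U x -> 0 <= V x <= c ->
      ((forall i, grad V x i = 0) <-> V x = 0))
   \/
   (Cinf_field U X /\ Cinf U V /\
    forall x, U x ->
      (forall k i, lie X k (fun y => grad V y i) x = 0) ->
      0 <= V x <= c -> V x = 0)) ->
  uniformly_asymptotically_stable U (fun x => vsub (X x) (grad V x))
    (fun x => U x /\ V x = 0).
Proof.
  intros HU HX HV HV0 _ Hperp Hc HK HA.
  assert (H : Hyp U X V c) by (constructor; auto).
  change (fun x => vsub (X x) (grad V x)) with (FF X V).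
  change (A3d U X V c) in HA.
  split; [|split].
  - intros x0 [Ux0 Vx0]. split.
    + apply (existence U X V c x0 H Ux0). lra.
    + intros y Hy t Ht. destruct (sol_in_K _ _ _ _ _ _ H Hy ltac:(lra) t Ht) as [[Uy [Vy _]] Vle].
      split; auto. lra.
  - intros eps Heps. destruct (eta_lemma U X V c eps H Heps) as [eta [Heta Heta']].
    destruct (nbhd_small U X V c (Rmin eta (c / 2)) H) as [d [Hd Hd']]. apply Rmin_glb_lt; lra.
    exists d. split; auto. intros x0 Hx0. destruct (Hd' x0 Hx0) as [Ux0 Vx0].
    pose proof (Rmin_l eta (c / 2)). pose proof (Rmin_r eta (c / 2)).
    split. apply (existence U X V c x0 H Ux0). lra.
    intros y Hy t Ht. destruct (sol_in_K _ _ _ _ _ _ H Hy ltac:(lra) t Ht) as [Ky Vle].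
    apply Heta'; auto. lra.
  - destruct (nbhd_small U X V c (c / 2) H) as [d0 [Hd0 Hd0']]. lra.
    exists d0. split; auto. intros eps Heps.
    destruct (eta_lemma U X V c eps H Heps) as [eta [Heta Heta']].
    destruct (T_lemma U X V c eta H HA Heta) as [N HN].
    exists (INR N + 1). split. pose proof (pos_INR N); lra.
    intros x0 Hx0. destruct (Hd0' x0 Hx0) as [Ux0 Vx0].
    split. apply (existence U X V c x0 H Ux0). lra.
    intros y Hy t Ht. pose proof (pos_INR N).
    destruct (sol_in_K _ _ _ _ _ _ H Hy ltac:(lra) t ltac:(lra)) as [Ky Vle].
    pose proof (sol_V_noninc _ _ _ _ _ _ H Hy (INR N) t ltac:(lra)).
    pose proof (HN x0 y ltac:(lra) Hy).
    apply Heta'; auto. lra.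
Qed.
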